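(* The function $$\varphi(x)=\frac12\log(1-x)+\frac{2xK(x)\big(E(x)-K(x)\big)}{2E(x)^2-2E(x)K(x)+x(1-x)K(x)^2}$$ is strictly decreasing from $(0,1)$ onto $(\log 4,\,8/5)$. In particular, for all $x\in(0,1)$, $$\frac{2xK(x)\big(K(x)-E(x)\big)}{8/5-\frac12\log(1-x)}\le 2E(x)K(x)-2E(x)^2-x(1-x)K(x)^2\le \frac{2xK(x)\big(K(x)-E(x)\big)}{\log4-\frac12\log(1-x)}.$$
   Context: $K(x)={\cal K}(\sqrt x)$ and $E(x)={\cal E}(\sqrt x)$ for $x\in[0,1)$, where ${\cal K}(r)=\int_0^{\pi/2}(1-r^2\sin^2t)^{-1/2}dt$ and ${\cal E}(r)=\int_0^{\pi/2}(1-r^2\sin^2t)^{1/2}dt$ are the complete elliptic integrals of the first and second kind. *)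

(* Defs.v *)
From Stdlib Require Import Reals.
From Coquelicot Require Import Coquelicot.
Open Scope R_scope.

Definition calK (r : R) : R :=
  RInt (fun t => / sqrt (1 - r ^ 2 * sin t ^ 2)) 0 (PI / 2).
Definition calE (r : R) : R :=
  RInt (fun t => sqrt (1 - r ^ 2 * sin t ^ 2)) 0 (PI / 2).

Definition Kx (x : R) : R := calK (sqrt x).
Definition Ex (x : R) : R := calE (sqrt x).

Definition phi (x : R) : R :=
  / 2 * ln (1 - x)
  + 2 * x * Kx x * (Ex x - Kx x)
    / (2 * Ex x ^ 2 - 2 * Ex x * Kx x + x * (1 - x) * Kx x ^ 2).

(* Main.v *)
Require Import Defs.
From Stdlib Require Import Reals Lra Psatz.
From Coquelicot Require Import Coquelicot.
Open Scope R_scope.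

Lemma sin2_bounds t : 0 <= sin t ^ 2 <= 1.
Proof. pose proof (sin2 t). pose proof (Rle_0_sqr (sin t)).
  pose proof (cos2 t). pose proof (Rle_0_sqr (cos t)). unfold Rsqr in *. split; nra. Qed.

Lemma Dl_pos x t : x < 1 -> 0 < 1 - x * sin t ^ 2.
Proof. intros. pose proof (sin2_bounds t). destruct (Rle_lt_dec 0 x); [nra|]. assert (x * sin t ^ 2 <= 0) by nra. lra. Qed.

Lemma inner_deriv t x : is_derive (fun u => 1 - u * sin t ^ 2) x (0 - 1 * sin t ^ 2).
Proof. auto_derive; auto; ring. Qed.
Lemma param_deriv (G G' : R -> R) x :
  x < 1 ->
  (forall z, 0 < z -> is_derive G z (G' z)) ->
  (forall z, 0 < z -> continuous G' z) ->
  is_derive (fun u => RInt (fun t => G (1 - u * sin t ^ 2)) 0 (PI/2)) x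
    (RInt (fun t => - sin t ^ 2 * G' (1 - x * sin t ^ 2)) 0 (PI/2)).
Proof.
  intros Hx HG HG'.
  assert (Hcont : forall z, 0 < z -> continuous G z).
  { intros z Hz. apply (ex_derive_continuous (V:=R_NormedModule) G). eexists. apply HG; auto. }
  set (eps := mkposreal ((1 - x)/2) ltac:(lra)).
  assert (Hloc : forall y, Rabs (y - x) < eps -> y < 1).
  { intros y Hy. simpl in Hy. apply Rabs_lt_between in Hy. lra. }

  assert (Heq : RInt (fun t => - sin t ^ 2 * G' (1 - x * sin t ^ 2)) 0 (PI/2)
     = RInt (fun t => Derive (fun u => G (1 - u * sin t ^ 2)) x) 0 (PI/2)).
  { apply RInt_ext. intros t _. symmetry. apply is_derive_unique.
    replace (- sin t ^ 2 * G' (1 - x * sin t ^ 2)) with ((0 - (1 * sin t ^ 2)) * G' (1 - x * sin t ^ 2)) by ring.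
    apply (is_derive_comp G (fun u => 1 - u * sin t ^ 2)).
    apply HG. apply Dl_pos; auto.
    apply inner_deriv. }
  rewrite Heq. clear Heq.
  apply is_derive_RInt_param.
  - exists eps. intros y Hy t _. eexists.
    apply (is_derive_comp G (fun u => 1 - u * sin t ^ 2)).
    apply HG. apply Dl_pos; auto.
    apply inner_deriv.
  - intros t _.
    apply continuity_2d_pt_ext_loc with (fun u v => - sin v ^ 2 * G' (1 - u * sin v ^ 2)).
    + exists eps. intros u v Hu Hv. symmetry. apply is_derive_unique.
      replace (- sin v ^ 2 * G' (1 - u * sin v ^ 2)) with ((0 - (1 * sin v ^ 2)) * G' (1 - u * sin v ^ 2)) by ring.
      apply (is_derive_comp G (fun u => 1 - u * sin v ^ 2)).
      apply HG. apply Dl_pos; auto.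
      apply inner_deriv.
    + assert (Hs : continuity_2d_pt (fun _ v => sin v ^ 2) x t).
      { apply continuity_1d_2d_pt_comp with (f := fun v => sin v ^ 2) (g := fun _ v => v).
        apply continuity_pt_filterlim. apply (ex_derive_continuous (V:=R_NormedModule)). auto_derive; auto. apply continuity_2d_pt_id2. }
      apply continuity_2d_pt_mult.
      * apply continuity_2d_pt_opp. exact Hs.
      * apply continuity_1d_2d_pt_comp with (f := G') (g := fun u v => 1 - u * sin v ^ 2).
        apply continuity_pt_filterlim. apply HG'. apply Dl_pos; auto.
        apply continuity_2d_pt_minus. apply continuity_2d_pt_const.
        apply continuity_2d_pt_mult. apply continuity_2d_pt_id1. exact Hs.
  - exists eps. intros y Hy. apply (ex_RInt_continuous (V:=R_CompleteNormedModule)). intros z _.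
    apply continuous_comp with (f := fun t => 1 - y * sin t ^ 2).
    + apply (ex_derive_continuous (V:=R_NormedModule)). auto_derive; auto.
    + apply Hcont. apply Dl_pos; auto.
Qed.

Definition KK x := RInt (fun t => / sqrt (1 - x * sin t ^ 2)) 0 (PI/2).
Definition EE x := RInt (fun t => sqrt (1 - x * sin t ^ 2)) 0 (PI/2).

Lemma cont_Dl x t : continuous (fun t => 1 - x * sin t ^ 2) t.
Proof. apply (ex_derive_continuous (V:=R_NormedModule)). auto_derive; auto. Qed.

Lemma exK x : x < 1 -> ex_RInt (fun t => / sqrt (1 - x * sin t ^ 2)) 0 (PI/2).
Proof. intros Hx. apply (ex_RInt_continuous (V:=R_CompleteNormedModule)). intros z _.
  apply continuous_Rinv_comp. apply continuous_sqrt_comp. apply cont_Dl.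
  apply Rgt_not_eq. apply sqrt_lt_R0. apply Dl_pos; auto. Qed.

Lemma exE x : x < 1 -> ex_RInt (fun t => sqrt (1 - x * sin t ^ 2)) 0 (PI/2).
Proof. intros Hx. apply (ex_RInt_continuous (V:=R_CompleteNormedModule)). intros z _.
  apply continuous_sqrt_comp. apply cont_Dl. Qed.

Lemma RInt_lin2 (a b : R -> R) (c d lo hi : R) :
  ex_RInt a lo hi -> ex_RInt b lo hi ->
  RInt (fun t => c * a t + d * b t) lo hi = c * RInt a lo hi + d * RInt b lo hi.
Proof.
  intros Ha Hb. apply is_RInt_unique.
  apply (is_RInt_plus (V:=R_NormedModule) (fun t => c * a t) (fun t => d * b t)).
  apply (is_RInt_scal (V:=R_NormedModule) a). apply (RInt_correct (V:=R_CompleteNormedModule)). exact Ha.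
  apply (is_RInt_scal (V:=R_NormedModule) b). apply (RInt_correct (V:=R_CompleteNormedModule)). exact Hb.
Qed.

Lemma EE_deriv x : 0 < x < 1 -> is_derive EE x ((EE x - KK x) / (2 * x)).
Proof.
  intros Hx.
  assert (H := param_deriv sqrt (fun z => / (2 * sqrt z)) x ltac:(lra)).
  assert (Hd : forall z, 0 < z -> is_derive sqrt z (/ (2 * sqrt z))).
  { intros z Hz. auto_derive. auto. field. apply Rgt_not_eq, sqrt_lt_R0; auto. }
  specialize (H Hd).
  assert (Hc : forall z, 0 < z -> continuous (fun z => / (2 * sqrt z)) z).
  { intros z Hz. apply (ex_derive_continuous (V:=R_NormedModule)). auto_derive.
    pose proof (sqrt_lt_R0 z Hz). repeat split; auto; lra. }
  specialize (H Hc). unfold EE.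
  replace ((RInt (fun t => sqrt (1 - x * sin t ^ 2)) 0 (PI / 2) - KK x) / (2 * x))
   with (RInt (fun t => - sin t ^ 2 * / (2 * sqrt (1 - x * sin t ^ 2))) 0 (PI / 2)).
  exact H.
  unfold KK.
  replace ((RInt (fun t => sqrt (1 - x * sin t ^ 2)) 0 (PI / 2) - RInt (fun t => / sqrt (1 - x * sin t ^ 2)) 0 (PI / 2)) / (2 * x))
    with (/ (2 * x) * RInt (fun t => sqrt (1 - x * sin t ^ 2)) 0 (PI / 2) + (- / (2 * x)) * RInt (fun t => / sqrt (1 - x * sin t ^ 2)) 0 (PI / 2)) by (field; lra).
  rewrite <- (RInt_lin2 (fun t => sqrt (1 - x * sin t ^ 2)) (fun t => / sqrt (1 - x * sin t ^ 2))); [| apply exE; lra | apply exK; lra].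
  apply RInt_ext. intros t _.
  pose proof (Dl_pos x t ltac:(lra)).
  pose proof (sqrt_lt_R0 _ H0). pose proof (sqrt_sqrt _ (Rlt_le _ _ H0)).
  set (D := sqrt (1 - x * sin t ^ 2)) in *.
  assert (Hs : sin t ^ 2 = (1 - D * D) / x) by (rewrite H2; field; lra).
  rewrite Hs. match goal with |- ?a = ?b => change (@eq R a b) end. field. lra.
Qed.

Definition dH x t := (1 - 2 * sin t ^ 2 + x * sin t ^ 4) / ((1 - x * sin t ^ 2) * sqrt (1 - x * sin t ^ 2)).

Lemma H_deriv x t : x < 1 ->
  is_derive (fun t => sin t * cos t / sqrt (1 - x * sin t ^ 2)) t (dH x t).
Proof.
  intros Hx. pose proof (Dl_pos x t Hx) as H0.
  pose proof (sqrt_lt_R0 _ H0) as H1. pose proof (sqrt_sqrt _ (Rlt_le _ _ H0)) as H2.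
  auto_derive; replace (1 + - (x * (sin t * (sin t * 1)))) with (1 - x * sin t ^ 2) by ring.
  split; [lra|split;[lra|auto]].
  unfold dH.
  set (D := sqrt (1 - x * sin t ^ 2)) in *.
  pose proof (sin2 t) as Hc. unfold Rsqr in Hc.
  change (@eq R (((1 * cos t * cos t + sin t * (1 * - sin t)) * / D) +
 sin t * cos t *
 (-
  (- (x * (1 * cos t * ((1 + 1) * (sin t * 1)))) *
   / (2 * D)) *
  /
  (D * D))) ((1 - 2 * sin t ^ 2 + x * sin t ^ 4) / ((1 - x * sin t ^ 2) * D))).
  rewrite <- H2. field_simplify_eq; [|lra].
  assert (Hc2 : cos t ^ 2 = 1 - sin t ^ 2) by (simpl; lra).
  assert (HD2 : D ^ 2 = 1 - x * sin t ^ 2) by (simpl; lra).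
  rewrite Hc2, HD2. ring.
Qed.

Lemma dH_int x : x < 1 -> is_RInt (dH x) 0 (PI/2) 0.
Proof.
  intros Hx.
  assert (HI : is_RInt (dH x) 0 (PI/2) (minus ((fun t => sin t * cos t / sqrt (1 - x * sin t ^ 2)) (PI/2))
                        ((fun t => sin t * cos t / sqrt (1 - x * sin t ^ 2)) 0))).
  { apply (is_RInt_derive (V:=R_CompleteNormedModule) (fun t => sin t * cos t / sqrt (1 - x * sin t ^ 2)) (dH x)).
  - intros t _. apply H_deriv; auto.
  - intros t _. unfold dH. apply (ex_derive_continuous (V:=R_NormedModule)).
    pose proof (Dl_pos x t Hx) as H0. pose proof (sqrt_lt_R0 _ H0) as H1.
    auto_derive; replace (1 + - (x * (sin t * (sin t * 1)))) with (1 - x * sin t ^ 2) by ring.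
    repeat split; auto; try lra. apply Rgt_not_eq. apply Rmult_lt_0_compat; lra. }
  assert (Hv : minus ((fun t => sin t * cos t / sqrt (1 - x * sin t ^ 2)) (PI/2))
                        ((fun t => sin t * cos t / sqrt (1 - x * sin t ^ 2)) 0) = 0).
  { cbv beta. rewrite cos_PI2, sin_0. rewrite Rmult_0_r, Rmult_0_l. unfold Rdiv. rewrite !Rmult_0_l.
    unfold minus, plus, opp; simpl. ring. }
  cbv beta in HI. rewrite Hv in HI. exact HI.
Qed.

Lemma RInt_lin3 (a b c : R -> R) (p q r lo hi : R) :
  ex_RInt a lo hi -> ex_RInt b lo hi -> ex_RInt c lo hi ->
  RInt (fun t => p * a t + q * b t + r * c t) lo hi = p * RInt a lo hi + q * RInt b lo hi + r * RInt c lo hi.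
Proof.
  intros Ha Hb Hc. apply is_RInt_unique.
  apply (is_RInt_plus (V:=R_NormedModule) (fun t => p * a t + q * b t) (fun t => r * c t)).
  apply (is_RInt_plus (V:=R_NormedModule) (fun t => p * a t) (fun t => q * b t)).
  apply (is_RInt_scal (V:=R_NormedModule) a). apply (RInt_correct (V:=R_CompleteNormedModule)). exact Ha.
  apply (is_RInt_scal (V:=R_NormedModule) b). apply (RInt_correct (V:=R_CompleteNormedModule)). exact Hb.
  apply (is_RInt_scal (V:=R_NormedModule) c). apply (RInt_correct (V:=R_CompleteNormedModule)). exact Hc.
Qed.

Lemma KK_deriv x : 0 < x < 1 -> is_derive KK x ((EE x - (1 - x) * KK x) / (2 * x * (1 - x))).
Proof.
  intros Hx.
  assert (H := param_deriv (fun z => / sqrt z) (fun z => - / (2 * z * sqrt z)) x ltac:(lra)).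
  assert (Hd : forall z, 0 < z -> is_derive (fun z => / sqrt z) z (- / (2 * z * sqrt z))).
  { intros z Hz. pose proof (sqrt_lt_R0 z Hz). pose proof (sqrt_sqrt z (Rlt_le _ _ Hz)).
    auto_derive. split; auto; lra. 
    match goal with |- ?a = ?b => change (@eq R a b) end.
    rewrite H1. field. lra. }
  specialize (H Hd).
  assert (Hc : forall z, 0 < z -> continuous (fun z => - / (2 * z * sqrt z)) z).
  { intros z Hz. apply (ex_derive_continuous (V:=R_NormedModule)). auto_derive.
    pose proof (sqrt_lt_R0 z Hz). repeat split; auto; try lra. apply Rgt_not_eq. nra. }
  specialize (H Hc). unfold KK.
  replace ((EE x - (1 - x) * RInt (fun t => / sqrt (1 - x * sin t ^ 2)) 0 (PI / 2)) / (2 * x * (1 - x)))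
   with (RInt (fun t => - sin t ^ 2 * - / (2 * (1 - x * sin t ^ 2) * sqrt (1 - x * sin t ^ 2))) 0 (PI / 2)).
  exact H.
  unfold EE.
  replace ((RInt (fun t => sqrt (1 - x * sin t ^ 2)) 0 (PI / 2) - (1 - x) * RInt (fun t => / sqrt (1 - x * sin t ^ 2)) 0 (PI / 2)) / (2 * x * (1 - x)))
    with (/ (2 * x * (1 - x)) * RInt (fun t => sqrt (1 - x * sin t ^ 2)) 0 (PI / 2) + (- / (2 * x)) * RInt (fun t => / sqrt (1 - x * sin t ^ 2)) 0 (PI / 2) + (- / (2 * (1 - x))) * RInt (dH x) 0 (PI/2)).
  2:{ rewrite (is_RInt_unique _ _ _ _ (dH_int x ltac:(lra))). field; lra. }
  rewrite <- (RInt_lin3 (fun t => sqrt (1 - x * sin t ^ 2)) (fun t => / sqrt (1 - x * sin t ^ 2)) (dH x)); [| apply exE; lra | apply exK; lra | exists 0; apply dH_int; lra].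
  apply RInt_ext. intros t _.
  pose proof (Dl_pos x t ltac:(lra)).
  pose proof (sqrt_lt_R0 _ H0). pose proof (sqrt_sqrt _ (Rlt_le _ _ H0)).
  unfold dH.
  set (D := sqrt (1 - x * sin t ^ 2)) in *.
  match goal with |- ?a = ?b => change (@eq R a b) end.
  rewrite <- H2. field_simplify_eq; [|repeat split; lra].
  assert (HD2 : D ^ 2 = 1 - x * sin t ^ 2) by (simpl; lra).
  assert (HD4 : D ^ 4 = (1 - x * sin t ^ 2)^2) by (rewrite <- HD2; ring).
  try rewrite HD4; try rewrite HD2. ring.
Qed.

Lemma RInt_one : RInt (fun _ => 1) 0 (PI/2) = PI/2.
Proof. rewrite RInt_const. unfold scal; simpl. unfold mult; simpl. ring. Qed.

Lemma PI2_pos : 0 < PI/2.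
Proof. pose proof PI_RGT_0. lra. Qed.

Lemma sqrt_Dl_le1 x t : 0 <= x -> sqrt (1 - x * sin t ^ 2) <= 1.
Proof. intros Hx. pose proof (sin2_bounds t).
  assert (H2 : 1 - x * sin t ^ 2 <= 1) by (assert (0 <= x * sin t ^ 2) by (apply Rmult_le_pos; lra); lra).
  pose proof (sqrt_le_1_alt _ _ H2). rewrite sqrt_1 in H0. exact H0. Qed.

Lemma KK_ge x : 0 <= x < 1 -> PI/2 <= KK x.
Proof.
  intros Hx. rewrite <- RInt_one. unfold KK. apply RInt_le.
  pose proof PI2_pos; lra.
  apply (ex_RInt_continuous (V:=R_CompleteNormedModule)). intros; apply continuous_const.
  apply exK; lra.
  intros t _. pose proof (Dl_pos x t ltac:(lra)). pose proof (sin2_bounds t).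
  assert (sqrt (1 - x * sin t ^ 2) <= 1).
  { apply sqrt_Dl_le1; lra. }
  pose proof (sqrt_lt_R0 _ H).
  apply Rle_trans with (/ 1); [rewrite Rinv_1; lra | apply Rinv_le_contravar; lra].
Qed.

Lemma EE_le_KK x : 0 <= x < 1 -> EE x <= KK x.
Proof.
  intros Hx. unfold EE, KK. apply RInt_le.
  pose proof PI2_pos; lra. apply exE; lra. apply exK; lra.
  intros t _. pose proof (Dl_pos x t ltac:(lra)). pose proof (sin2_bounds t).
  assert (sqrt (1 - x * sin t ^ 2) <= 1).
  { apply sqrt_Dl_le1; lra. }
  pose proof (sqrt_lt_R0 _ H).
  assert (1 <= / sqrt (1 - x * sin t ^ 2)). { apply Rle_trans with (/ 1); [rewrite Rinv_1; lra | apply Rinv_le_contravar; lra]. }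
  lra.
Qed.

Lemma EE_ge x : 0 <= x < 1 -> (1 - x) * KK x <= EE x.
Proof.
  intros Hx. unfold EE, KK.
  rewrite <- (RInt_scal (V:=R_CompleteNormedModule)) by (apply exK; lra).
  apply RInt_le.
  pose proof PI2_pos; lra.
  apply (ex_RInt_scal (V:=R_CompleteNormedModule)). apply exK; lra. apply exE; lra.
  intros t _. pose proof (Dl_pos x t ltac:(lra)). pose proof (sin2_bounds t).
  pose proof (sqrt_lt_R0 _ H). pose proof (sqrt_sqrt _ (Rlt_le _ _ H)).
  unfold scal; simpl; unfold mult; simpl.
  set (D := sqrt (1 - x * sin t ^ 2)) in *.
  apply Rmult_le_reg_r with D; auto. rewrite Rmult_assoc, Rinv_l by lra. change (sin t * (sin t * 1)) with (sin t ^ 2). fold D. destruct H0. nra.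
Qed.

Lemma left_decrease (w : R -> R) m l a :
  is_derive w m l -> 0 < l -> a < m -> exists z, a < z < m /\ w z < w m.
Proof.
  intros Hd Hl Ham. apply is_derive_Reals in Hd.
  destruct (Hd (l/2) ltac:(lra)) as [d Hdd].
  set (h := - Rmin (d/2) ((m - a)/2)).
  assert (Hh1 : 0 < Rmin (d/2) ((m-a)/2)) by (apply Rmin_pos; destruct d; simpl; lra).
  assert (Hh2 : Rmin (d/2) ((m-a)/2) <= d/2) by apply Rmin_l.
  assert (Hh3 : Rmin (d/2) ((m-a)/2) <= (m-a)/2) by apply Rmin_r.
  specialize (Hdd h).
  assert (h <> 0) by (unfold h; lra).
  assert (Rabs h < d). { unfold h. rewrite Rabs_Ropp, Rabs_pos_eq by lra. destruct d; simpl in *; lra. }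
  specialize (Hdd H H0). apply Rabs_lt_between in Hdd.
  exists (m + h). split. unfold h; lra.
  destruct Hdd as [Hdd _].
  assert (Hq : 0 < (w (m + h) - w m) / h) by lra.
  assert (Hneg : h < 0) by (unfold h; lra).
  destruct (Rlt_or_le (w (m+h)) (w m)); auto.
  exfalso. assert ((w (m + h) - w m) / h <= 0).
  { unfold Rdiv. assert (/ h < 0) by (apply Rinv_lt_0_compat; lra). nra. }
  lra.
Qed.

Lemma comparison (w w' : R -> R) :
  (forall x, 0 < x < 1 -> is_derive w x (w' x)) ->
  (forall eps, 0 < eps -> exists d, 0 < d /\ forall x, 0 < x < d -> Rabs (w x) < eps) ->
  (forall x, 0 < x < 1 -> w x <= 0 -> 0 < w' x) ->
  forall x, 0 < x < 1 -> 0 < w x.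
Proof.
  intros Hd Hlim Hpos x0 Hx0.
  destruct (Rlt_or_le 0 (w x0)) as [Hok|Hle]; auto. exfalso.
  destruct (left_decrease w x0 (w' x0) 0 (Hd x0 Hx0) (Hpos x0 Hx0 Hle) ltac:(lra)) as [x1 [Hx1 Hw1]].
  destruct (Hlim (- w x1) ltac:(lra)) as [d [Hd0 Hd1]].
  set (x2 := Rmin (d/2) (x1/2)).
  assert (Hx2a : 0 < x2) by (apply Rmin_pos; lra).
  assert (Hx2b : x2 <= d/2) by apply Rmin_l.
  assert (Hx2c : x2 <= x1/2) by apply Rmin_r.
  specialize (Hd1 x2 ltac:(lra)). apply Rabs_lt_between in Hd1.
  assert (Hcont : forall c, x2 <= c <= x1 -> continuity_pt w c).
  { intros c Hc. apply continuity_pt_filterlim. apply (ex_derive_continuous (V:=R_NormedModule)).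
    exists (w' c). apply Hd. lra. }
  destruct (continuity_ab_min w x2 x1 ltac:(lra) Hcont) as [m [Hmin Hm]].
  assert (Hwm : w m <= w x1) by (apply Hmin; lra).
  assert (Hm2 : x2 < m). { destruct (Rle_lt_or_eq_dec x2 m (proj1 Hm)); auto. subst m. lra. }
  destruct (left_decrease w m (w' m) x2 (Hd m ltac:(lra)) (Hpos m ltac:(lra) ltac:(lra)) Hm2) as [z [Hz Hwz]].
  specialize (Hmin z ltac:(lra)). lra.
Qed.

Definition Fp (q : R) := (203/100)*q^1 + (-203/50)*q^2 + (689/100)*q^3 + (-159/25)*q^4 + (157/50)*q^5 + (-16/25)*q^6.

Definition dFp (q : R) := (203/100) + (-203/25)*q^1 + (2067/100)*q^2 + (-636/25)*q^3 + (157/10)*q^4 + (-96/25)*q^5.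

Lemma P1 q : 0 < q < 1 -> 0 < (1 - q^2)*q*dFp q - (Fp q ^2 - 2*q^2*Fp q + q^2).
Proof.
  intros [Hq0 Hq1].
  assert (T0 : 0 < q ^ 0 * (1 - q) ^ 8) by (apply Rmult_lt_0_compat; apply pow_lt; lra).
  assert (T1 : 0 < q ^ 1 * (1 - q) ^ 7) by (apply Rmult_lt_0_compat; apply pow_lt; lra).
  assert (T2 : 0 < q ^ 2 * (1 - q) ^ 6) by (apply Rmult_lt_0_compat; apply pow_lt; lra).
  assert (T3 : 0 < q ^ 3 * (1 - q) ^ 5) by (apply Rmult_lt_0_compat; apply pow_lt; lra).
  assert (T4 : 0 < q ^ 4 * (1 - q) ^ 4) by (apply Rmult_lt_0_compat; apply pow_lt; lra).
  assert (T5 : 0 < q ^ 5 * (1 - q) ^ 3) by (apply Rmult_lt_0_compat; apply pow_lt; lra).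
  assert (T6 : 0 < q ^ 6 * (1 - q) ^ 2) by (apply Rmult_lt_0_compat; apply pow_lt; lra).
  assert (T7 : 0 < q ^ 7 * (1 - q) ^ 1) by (apply Rmult_lt_0_compat; apply pow_lt; lra).
  assert (T8 : 0 < q ^ 8 * (1 - q) ^ 0) by (apply Rmult_lt_0_compat; apply pow_lt; lra).
  assert (HS : 0 < (203/100) * (q ^ 0 * (1 - q) ^ 8) + (90891/10000) * (q ^ 1 * (1 - q) ^ 7) + (92123/5000) * (q ^ 2 * (1 - q) ^ 6) + (218649/10000) * (q ^ 3 * (1 - q) ^ 5) + (5751/250) * (q ^ 4 * (1 - q) ^ 4) + (9057/400) * (q ^ 5 * (1 - q) ^ 3) + (2923/200) * (q ^ 6 * (1 - q) ^ 2) + (1747/400) * (q ^ 7 * (1 - q) ^ 1) + (3/10) * (q ^ 8 * (1 - q) ^ 0)) by lra.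
  assert (HP : 0 < q ^ 1 * (1 - q) ^ 3) by (apply Rmult_lt_0_compat; apply pow_lt; lra).
  assert (HE : (1 - q^2)*q*dFp q - (Fp q ^2 - 2*q^2*Fp q + q^2) = (q ^ 1 * (1 - q) ^ 3) * ((203/100) * (q ^ 0 * (1 - q) ^ 8) + (90891/10000) * (q ^ 1 * (1 - q) ^ 7) + (92123/5000) * (q ^ 2 * (1 - q) ^ 6) + (218649/10000) * (q ^ 3 * (1 - q) ^ 5) + (5751/250) * (q ^ 4 * (1 - q) ^ 4) + (9057/400) * (q ^ 5 * (1 - q) ^ 3) + (2923/200) * (q ^ 6 * (1 - q) ^ 2) + (1747/400) * (q ^ 7 * (1 - q) ^ 1) + (3/10) * (q ^ 8 * (1 - q) ^ 0))) by (unfold Fp, dFp; field).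
  rewrite HE. apply Rmult_lt_0_compat; assumption.
Qed.

Lemma P2 q : 0 < q < 1 -> 0 < -(2*(2 - 3*(1-q^2))*(1 - Fp q)^2 + 4*(1-q^2)*(1-Fp q) - (1-q^2)^2*(3 - (1-q^2))).
Proof.
  intros [Hq0 Hq1].
  assert (T0 : 0 < q ^ 0 * (1 - q) ^ 8) by (apply Rmult_lt_0_compat; apply pow_lt; lra).
  assert (T1 : 0 < q ^ 1 * (1 - q) ^ 7) by (apply Rmult_lt_0_compat; apply pow_lt; lra).
  assert (T2 : 0 < q ^ 2 * (1 - q) ^ 6) by (apply Rmult_lt_0_compat; apply pow_lt; lra).
  assert (T3 : 0 < q ^ 3 * (1 - q) ^ 5) by (apply Rmult_lt_0_compat; apply pow_lt; lra).
  assert (T4 : 0 < q ^ 4 * (1 - q) ^ 4) by (apply Rmult_lt_0_compat; apply pow_lt; lra).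
  assert (T5 : 0 < q ^ 5 * (1 - q) ^ 3) by (apply Rmult_lt_0_compat; apply pow_lt; lra).
  assert (T6 : 0 < q ^ 6 * (1 - q) ^ 2) by (apply Rmult_lt_0_compat; apply pow_lt; lra).
  assert (T7 : 0 < q ^ 7 * (1 - q) ^ 1) by (apply Rmult_lt_0_compat; apply pow_lt; lra).
  assert (T8 : 0 < q ^ 8 * (1 - q) ^ 0) by (apply Rmult_lt_0_compat; apply pow_lt; lra).
  assert (HS : 0 < (16209/5000) * (q ^ 0 * (1 - q) ^ 8) + (13859/625) * (q ^ 1 * (1 - q) ^ 7) + (308341/5000) * (q ^ 2 * (1 - q) ^ 6) + (251927/2500) * (q ^ 3 * (1 - q) ^ 5) + (465293/5000) * (q ^ 4 * (1 - q) ^ 4) + (12779/250) * (q ^ 5 * (1 - q) ^ 3) + (691/40) * (q ^ 6 * (1 - q) ^ 2) + (459/100) * (q ^ 7 * (1 - q) ^ 1) + (19/20) * (q ^ 8 * (1 - q) ^ 0)) by lra.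
  assert (HP : 0 < q ^ 2 * (1 - q) ^ 4) by (apply Rmult_lt_0_compat; apply pow_lt; lra).
  assert (HE : -(2*(2 - 3*(1-q^2))*(1 - Fp q)^2 + 4*(1-q^2)*(1-Fp q) - (1-q^2)^2*(3 - (1-q^2))) = (q ^ 2 * (1 - q) ^ 4) * ((16209/5000) * (q ^ 0 * (1 - q) ^ 8) + (13859/625) * (q ^ 1 * (1 - q) ^ 7) + (308341/5000) * (q ^ 2 * (1 - q) ^ 6) + (251927/2500) * (q ^ 3 * (1 - q) ^ 5) + (465293/5000) * (q ^ 4 * (1 - q) ^ 4) + (12779/250) * (q ^ 5 * (1 - q) ^ 3) + (691/40) * (q ^ 6 * (1 - q) ^ 2) + (459/100) * (q ^ 7 * (1 - q) ^ 1) + (19/20) * (q ^ 8 * (1 - q) ^ 0))) by (unfold Fp, dFp; field).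
  rewrite HE. apply Rmult_lt_0_compat; assumption.
Qed.

Lemma P3 q : 0 < q < 1 -> 0 < Fp q - q^2.
Proof.
  intros [Hq0 Hq1].
  assert (T0 : 0 < q ^ 0 * (1 - q) ^ 4) by (apply Rmult_lt_0_compat; apply pow_lt; lra).
  assert (T1 : 0 < q ^ 1 * (1 - q) ^ 3) by (apply Rmult_lt_0_compat; apply pow_lt; lra).
  assert (T2 : 0 < q ^ 2 * (1 - q) ^ 2) by (apply Rmult_lt_0_compat; apply pow_lt; lra).
  assert (T3 : 0 < q ^ 3 * (1 - q) ^ 1) by (apply Rmult_lt_0_compat; apply pow_lt; lra).
  assert (T4 : 0 < q ^ 4 * (1 - q) ^ 0) by (apply Rmult_lt_0_compat; apply pow_lt; lra).
  assert (HS : 0 < (203/100) * (q ^ 0 * (1 - q) ^ 4) + (509/100) * (q ^ 1 * (1 - q) ^ 3) + (139/20) * (q ^ 2 * (1 - q) ^ 2) + (17/4) * (q ^ 3 * (1 - q) ^ 1) + (1) * (q ^ 4 * (1 - q) ^ 0)) by lra.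
  assert (HP : 0 < q ^ 1 * (1 - q) ^ 1) by (apply Rmult_lt_0_compat; apply pow_lt; lra).
  assert (HE : Fp q - q^2 = (q ^ 1 * (1 - q) ^ 1) * ((203/100) * (q ^ 0 * (1 - q) ^ 4) + (509/100) * (q ^ 1 * (1 - q) ^ 3) + (139/20) * (q ^ 2 * (1 - q) ^ 2) + (17/4) * (q ^ 3 * (1 - q) ^ 1) + (1) * (q ^ 4 * (1 - q) ^ 0))) by (unfold Fp, dFp; field).
  rewrite HE. apply Rmult_lt_0_compat; assumption.
Qed.

Lemma P4a q : 0 < q < 1 -> 0 < 1 - Fp q.
Proof.
  intros [Hq0 Hq1].
  assert (T0 : 0 < q ^ 0 * (1 - q) ^ 5) by (apply Rmult_lt_0_compat; apply pow_lt; lra).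
  assert (T1 : 0 < q ^ 1 * (1 - q) ^ 4) by (apply Rmult_lt_0_compat; apply pow_lt; lra).
  assert (T2 : 0 < q ^ 2 * (1 - q) ^ 3) by (apply Rmult_lt_0_compat; apply pow_lt; lra).
  assert (T3 : 0 < q ^ 3 * (1 - q) ^ 2) by (apply Rmult_lt_0_compat; apply pow_lt; lra).
  assert (T4 : 0 < q ^ 4 * (1 - q) ^ 1) by (apply Rmult_lt_0_compat; apply pow_lt; lra).
  assert (T5 : 0 < q ^ 5 * (1 - q) ^ 0) by (apply Rmult_lt_0_compat; apply pow_lt; lra).
  assert (HS : 0 < (1) * (q ^ 0 * (1 - q) ^ 5) + (397/100) * (q ^ 1 * (1 - q) ^ 4) + (891/100) * (q ^ 2 * (1 - q) ^ 3) + (181/20) * (q ^ 3 * (1 - q) ^ 2) + (19/4) * (q ^ 4 * (1 - q) ^ 1) + (1) * (q ^ 5 * (1 - q) ^ 0)) by lra.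
  assert (HP : 0 < q ^ 0 * (1 - q) ^ 1) by (apply Rmult_lt_0_compat; apply pow_lt; lra).
  assert (HE : 1 - Fp q = (q ^ 0 * (1 - q) ^ 1) * ((1) * (q ^ 0 * (1 - q) ^ 5) + (397/100) * (q ^ 1 * (1 - q) ^ 4) + (891/100) * (q ^ 2 * (1 - q) ^ 3) + (181/20) * (q ^ 3 * (1 - q) ^ 2) + (19/4) * (q ^ 4 * (1 - q) ^ 1) + (1) * (q ^ 5 * (1 - q) ^ 0))) by (unfold Fp, dFp; field).
  rewrite HE. apply Rmult_lt_0_compat; assumption.
Qed.

Lemma P4b q : 0 < q < 1 -> 0 < Fp q - q.
Proof.
  intros [Hq0 Hq1].
  assert (T0 : 0 < q ^ 0 * (1 - q) ^ 3) by (apply Rmult_lt_0_compat; apply pow_lt; lra).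
  assert (T1 : 0 < q ^ 1 * (1 - q) ^ 2) by (apply Rmult_lt_0_compat; apply pow_lt; lra).
  assert (T2 : 0 < q ^ 2 * (1 - q) ^ 1) by (apply Rmult_lt_0_compat; apply pow_lt; lra).
  assert (T3 : 0 < q ^ 3 * (1 - q) ^ 0) by (apply Rmult_lt_0_compat; apply pow_lt; lra).
  assert (HS : 0 < (103/100) * (q ^ 0 * (1 - q) ^ 3) + (109/100) * (q ^ 1 * (1 - q) ^ 2) + (19/20) * (q ^ 2 * (1 - q) ^ 1) + (1/4) * (q ^ 3 * (1 - q) ^ 0)) by lra.
  assert (HP : 0 < q ^ 1 * (1 - q) ^ 2) by (apply Rmult_lt_0_compat; apply pow_lt; lra).
  assert (HE : Fp q - q = (q ^ 1 * (1 - q) ^ 2) * ((103/100) * (q ^ 0 * (1 - q) ^ 3) + (109/100) * (q ^ 1 * (1 - q) ^ 2) + (19/20) * (q ^ 2 * (1 - q) ^ 1) + (1/4) * (q ^ 3 * (1 - q) ^ 0))) by (unfold Fp, dFp; field).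
  rewrite HE. apply Rmult_lt_0_compat; assumption.
Qed.

Lemma P5 q : 0 < q < 1 -> 0 < -(2*Fp q^2 - 2*Fp q + (1-q^2)*q^2).
Proof.
  intros [Hq0 Hq1].
  assert (T0 : 0 < q ^ 0 * (1 - q) ^ 9) by (apply Rmult_lt_0_compat; apply pow_lt; lra).
  assert (T1 : 0 < q ^ 1 * (1 - q) ^ 8) by (apply Rmult_lt_0_compat; apply pow_lt; lra).
  assert (T2 : 0 < q ^ 2 * (1 - q) ^ 7) by (apply Rmult_lt_0_compat; apply pow_lt; lra).
  assert (T3 : 0 < q ^ 3 * (1 - q) ^ 6) by (apply Rmult_lt_0_compat; apply pow_lt; lra).
  assert (T4 : 0 < q ^ 4 * (1 - q) ^ 5) by (apply Rmult_lt_0_compat; apply pow_lt; lra).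
  assert (T5 : 0 < q ^ 5 * (1 - q) ^ 4) by (apply Rmult_lt_0_compat; apply pow_lt; lra).
  assert (T6 : 0 < q ^ 6 * (1 - q) ^ 3) by (apply Rmult_lt_0_compat; apply pow_lt; lra).
  assert (T7 : 0 < q ^ 7 * (1 - q) ^ 2) by (apply Rmult_lt_0_compat; apply pow_lt; lra).
  assert (T8 : 0 < q ^ 8 * (1 - q) ^ 1) by (apply Rmult_lt_0_compat; apply pow_lt; lra).
  assert (T9 : 0 < q ^ 9 * (1 - q) ^ 0) by (apply Rmult_lt_0_compat; apply pow_lt; lra).
  assert (HS : 0 < (203/50) * (q ^ 0 * (1 - q) ^ 9) + (136491/5000) * (q ^ 1 * (1 - q) ^ 8) + (241073/2500) * (q ^ 2 * (1 - q) ^ 7) + (1043549/5000) * (q ^ 3 * (1 - q) ^ 6) + (76007/250) * (q ^ 4 * (1 - q) ^ 5) + (60493/200) * (q ^ 5 * (1 - q) ^ 4) + (20277/100) * (q ^ 6 * (1 - q) ^ 3) + (17519/200) * (q ^ 7 * (1 - q) ^ 2) + (221/10) * (q ^ 8 * (1 - q) ^ 1) + (5/2) * (q ^ 9 * (1 - q) ^ 0)) by lra.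
  assert (HP : 0 < q ^ 1 * (1 - q) ^ 2) by (apply Rmult_lt_0_compat; apply pow_lt; lra).
  assert (HE : -(2*Fp q^2 - 2*Fp q + (1-q^2)*q^2) = (q ^ 1 * (1 - q) ^ 2) * ((203/50) * (q ^ 0 * (1 - q) ^ 9) + (136491/5000) * (q ^ 1 * (1 - q) ^ 8) + (241073/2500) * (q ^ 2 * (1 - q) ^ 7) + (1043549/5000) * (q ^ 3 * (1 - q) ^ 6) + (76007/250) * (q ^ 4 * (1 - q) ^ 5) + (60493/200) * (q ^ 5 * (1 - q) ^ 4) + (20277/100) * (q ^ 6 * (1 - q) ^ 3) + (17519/200) * (q ^ 7 * (1 - q) ^ 2) + (221/10) * (q ^ 8 * (1 - q) ^ 1) + (5/2) * (q ^ 9 * (1 - q) ^ 0))) by (unfold Fp, dFp; field).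
  rewrite HE. apply Rmult_lt_0_compat; assumption.
Qed.

Lemma P6 q : 0 < q < 1 -> 0 < Fp q - (1 - (1-q^2)/2 - (1-q^2)^2/16) + 1/2*(1-q)^3.
Proof.
  intros [Hq0 Hq1].
  assert (T0 : 0 < q ^ 0 * (1 - q) ^ 3) by (apply Rmult_lt_0_compat; apply pow_lt; lra).
  assert (T1 : 0 < q ^ 1 * (1 - q) ^ 2) by (apply Rmult_lt_0_compat; apply pow_lt; lra).
  assert (T2 : 0 < q ^ 2 * (1 - q) ^ 1) by (apply Rmult_lt_0_compat; apply pow_lt; lra).
  assert (T3 : 0 < q ^ 3 * (1 - q) ^ 0) by (apply Rmult_lt_0_compat; apply pow_lt; lra).
  assert (HS : 0 < (1/16) * (q ^ 0 * (1 - q) ^ 3) + (181/200) * (q ^ 1 * (1 - q) ^ 2) + (161/400) * (q ^ 2 * (1 - q) ^ 1) + (1/5) * (q ^ 3 * (1 - q) ^ 0)) by lra.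
  assert (HP : 0 < q ^ 0 * (1 - q) ^ 3) by (apply Rmult_lt_0_compat; apply pow_lt; lra).
  assert (HE : Fp q - (1 - (1-q^2)/2 - (1-q^2)^2/16) + 1/2*(1-q)^3 = (q ^ 0 * (1 - q) ^ 3) * ((1/16) * (q ^ 0 * (1 - q) ^ 3) + (181/200) * (q ^ 1 * (1 - q) ^ 2) + (161/400) * (q ^ 2 * (1 - q) ^ 1) + (1/5) * (q ^ 3 * (1 - q) ^ 0))) by (unfold Fp, dFp; field).
  rewrite HE. apply Rmult_lt_0_compat; assumption.
Qed.

Definition r x := EE x / KK x.

Lemma KK_pos x : 0 <= x < 1 -> 0 < KK x.
Proof. intros. pose proof (KK_ge x H). pose proof PI2_pos. lra. Qed.

Lemma r_deriv x : 0 < x < 1 ->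
  is_derive r x (- (r x ^ 2 - 2 * (1 - x) * r x + (1 - x)) / (2 * x * (1 - x))).
Proof.
  intros Hx. unfold r.
  pose proof (KK_pos x ltac:(lra)).
  assert (HdE : Derive (fun y => EE y) x = (EE x - KK x) / (2 * x)) by (apply is_derive_unique; apply EE_deriv; auto).
  assert (HdK : Derive (fun y => KK y) x = (EE x - (1 - x) * KK x) / (2 * x * (1 - x))) by (apply is_derive_unique; apply KK_deriv; auto).
  auto_derive.
  - repeat split; try lra. exists ((EE x - KK x) / (2 * x)); apply EE_deriv; auto.
    exists ((EE x - (1 - x) * KK x) / (2 * x * (1 - x))); apply KK_deriv; auto.
  - rewrite HdE, HdK. field. repeat split; lra.
Qed.

Lemma r_le1 x : 0 <= x < 1 -> r x <= 1.
Proof. intros. unfold r. pose proof (KK_pos x H). pose proof (EE_le_KK x H).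
  apply Rmult_le_reg_r with (KK x); auto. unfold Rdiv. rewrite Rmult_assoc, Rinv_l; lra. Qed.

Lemma r_ge x : 0 <= x < 1 -> 1 - x <= r x.
Proof. intros. unfold r. pose proof (KK_pos x H). pose proof (EE_ge x H).
  apply Rmult_le_reg_r with (KK x); auto. unfold Rdiv. rewrite Rmult_assoc, Rinv_l; lra. Qed.

Definition Fx x := Fp (sqrt (1 - x)).

Lemma Fp_deriv q : is_derive Fp q (dFp q).
Proof. unfold Fp, dFp. auto_derive; auto. field. Qed.

Lemma sq_facts x : 0 < x < 1 -> 0 < sqrt (1 - x) < 1 /\ sqrt (1 - x) ^ 2 = 1 - x.
Proof.
  intros Hx. split. split. apply sqrt_lt_R0; lra.
  apply Rlt_le_trans with (sqrt 1); [apply sqrt_lt_1_alt; lra | rewrite sqrt_1; lra].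
  apply pow2_sqrt. lra.
Qed.

Lemma Fx_deriv x : 0 < x < 1 -> is_derive Fx x (dFp (sqrt (1 - x)) * (- / (2 * sqrt (1 - x)))).
Proof.
  intros Hx. destruct (sq_facts x Hx) as [[Hq0 Hq1] Hq2].
  unfold Fx.
  assert (Hd : Derive (fun y => Fp y) (sqrt (1 - x)) = dFp (sqrt (1 - x))) by (apply is_derive_unique; apply Fp_deriv).
  auto_derive.
  - repeat split; try lra. exists (dFp (sqrt (1 - x))). apply Fp_deriv.
  - replace (1 + - x) with (1 - x) by ring. rewrite Hd. field. lra.
Qed.

Lemma r_lower x : 0 < x < 1 -> Fx x < r x.
Proof.
  intros Hx0.
  assert (H := comparison (fun x => r x - Fx x)
    (fun x => - (r x ^ 2 - 2 * (1 - x) * r x + (1 - x)) / (2 * x * (1 - x)) - dFp (sqrt (1 - x)) * (- / (2 * sqrt (1 - x))))).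
  assert (Hr : 0 < r x - Fx x); [|lra].
  apply H; auto; clear H x Hx0.
  - intros x Hx. apply (is_derive_minus (V:=R_NormedModule) r Fx). apply r_deriv; auto. apply Fx_deriv; auto.
  - intros eps Heps. exists (Rmin 1 (eps/2)). split. apply Rmin_pos; lra.
    intros x Hx. pose proof (Rmin_l 1 (eps/2)). pose proof (Rmin_r 1 (eps/2)).
    destruct (sq_facts x ltac:(lra)) as [[Hq0 Hq1] Hq2].
    pose proof (r_le1 x ltac:(lra)). pose proof (r_ge x ltac:(lra)).
    pose proof (P4a _ (conj Hq0 Hq1)). pose proof (P4b _ (conj Hq0 Hq1)).
    unfold Fx. set (q := sqrt (1 - x)) in *.
    assert (1 - q <= x) by nra.
    apply Rabs_lt_between. split; lra.
  - intros x Hx Hw.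
    destruct (sq_facts x ltac:(lra)) as [[Hq0 Hq1] Hq2].
    pose proof (r_le1 x ltac:(lra)). pose proof (r_ge x ltac:(lra)).
    pose proof (P1 _ (conj Hq0 Hq1)). pose proof (P3 _ (conj Hq0 Hq1)).
    unfold Fx in *. set (q := sqrt (1 - x)) in *. set (F := Fp q) in *. set (rr := r x) in *.
    clearbody q F rr. assert (Hxq : x = 1 - q ^ 2) by lra. subst x.
    assert (Hid : - (rr ^ 2 - 2 * (1 - (1 - q ^ 2)) * rr + (1 - (1 - q ^ 2))) / (2 * (1 - q ^ 2) * (1 - (1 - q ^ 2))) - dFp q * - / (2 * q)
       = ((2 * (1 - (1 - q ^ 2)) - rr - F) * (rr - F) + ((1 - q^2)*q*dFp q - (F ^2 - 2*q^2*F + q^2))) / (2 * (1 - q ^ 2) * (1 - (1 - q ^ 2)))).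
    { field. repeat split; try lra. }
    rewrite Hid. apply Rdiv_lt_0_compat; [|nra].
    assert (0 <= (2 * (1 - (1 - q ^ 2)) - rr - F) * (rr - F)) by nra. lra.
Qed.

Definition gx x := 1 - x / 2 - x ^ 2 / 16.

Lemma r_upper x : 0 < x < 1 -> r x < gx x.
Proof.
  intros Hx0.
  assert (H := comparison (fun x => gx x - r x)
    (fun x => (- / 2 - x / 8) - - (r x ^ 2 - 2 * (1 - x) * r x + (1 - x)) / (2 * x * (1 - x)))).
  assert (Hr : 0 < gx x - r x); [|lra].
  apply H; auto; clear H x Hx0.
  - intros x Hx. apply (is_derive_minus (V:=R_NormedModule) gx r).
    unfold gx. auto_derive; auto. field. apply r_deriv; auto.
  - intros eps Heps. exists (Rmin 1 (eps/2)). split. apply Rmin_pos; lra.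
    intros x Hx. pose proof (Rmin_l 1 (eps/2)). pose proof (Rmin_r 1 (eps/2)).
    pose proof (r_le1 x ltac:(lra)). pose proof (r_ge x ltac:(lra)).
    unfold gx. apply Rabs_lt_between. split; nra.
  - intros x Hx Hw.
    pose proof (r_le1 x ltac:(lra)). pose proof (r_ge x ltac:(lra)).
    unfold gx in *. set (rr := r x) in *.
    assert (Hid : (- / 2 - x / 8) - - (rr ^ 2 - 2 * (1 - x) * rr + (1 - x)) / (2 * x * (1 - x))
       = ((2 * (1 - x) - (1 - x / 2 - x ^ 2 / 16) - rr) * (1 - x / 2 - x ^ 2 / 16 - rr) + (3 * x^3/16 + x^4/256)) / (2 * x * (1 - x))).
    { field. lra. }
    rewrite Hid. apply Rdiv_lt_0_compat; [|nra].
    assert (Hg : 1 - x <= 1 - x / 2 - x ^ 2 / 16) by nra.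
    assert (0 <= (2 * (1 - x) - (1 - x / 2 - x ^ 2 / 16) - rr) * (1 - x / 2 - x ^ 2 / 16 - rr)).
    { assert (Ha : 2 * (1 - x) - (1 - x / 2 - x ^ 2 / 16) - rr <= 0) by lra.
      assert (Hb : 1 - x / 2 - x ^ 2 / 16 - rr <= 0) by lra.
      replace ((2 * (1 - x) - (1 - x / 2 - x ^ 2 / 16) - rr) * (1 - x / 2 - x ^ 2 / 16 - rr))
        with ((-(2 * (1 - x) - (1 - x / 2 - x ^ 2 / 16) - rr)) * (-(1 - x / 2 - x ^ 2 / 16 - rr))) by ring.
      apply Rmult_le_pos; lra. }
    assert (0 < 3 * x^3/16 + x^4/256) by (destruct Hx; assert (0 < x^3) by (apply pow_lt; lra); assert (0 < x^4) by (apply pow_lt; lra); lra). lra.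
Qed.

Lemma Kx_eq x : 0 <= x -> Kx x = KK x.
Proof. intros. unfold Kx, calK, KK. rewrite pow2_sqrt by auto. reflexivity. Qed.
Lemma Ex_eq x : 0 <= x -> Ex x = EE x.
Proof. intros. unfold Ex, calE, EE. rewrite pow2_sqrt by auto. reflexivity. Qed.

Definition Dn x := 2 * EE x ^ 2 - 2 * EE x * KK x + x * (1 - x) * KK x ^ 2.
Definition phi2 x := / 2 * ln (1 - x) + 2 * x * KK x * (EE x - KK x) / Dn x.

Lemma phi_eq x : 0 <= x -> phi x = phi2 x.
Proof. intros. unfold phi, phi2, Dn. rewrite Kx_eq, Ex_eq by auto. reflexivity. Qed.

Definition Qf x t := 2 * (2 - 3 * x) * t ^ 2 + 4 * x * t - x ^ 2 * (3 - x).

Lemma g_neg x : 0 < x < 1 -> 2 * gx x ^ 2 - 2 * gx x + x * (1 - x) < 0.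
Proof. intros. unfold gx.
  replace (2 * (1 - x / 2 - x ^ 2 / 16) ^ 2 - 2 * (1 - x / 2 - x ^ 2 / 16) + x * (1 - x))
    with (- x^2 * (5/8 - x / 8 - x^2/128)) by field.
  assert (0 < x ^ 2) by (apply pow_lt; lra). assert (0 < x^3) by (apply pow_lt; lra). nra.
Qed.

Lemma r_between x : 0 < x < 1 -> Fx x < r x < gx x.
Proof. intros. split. apply r_lower; auto. apply r_upper; auto. Qed.

Lemma Dquad_neg x : 0 < x < 1 -> 2 * r x ^ 2 - 2 * r x + x * (1 - x) < 0.
Proof.
  intros Hx. destruct (r_between x Hx) as [H1 H2].
  pose proof (g_neg x Hx).
  destruct (sq_facts x Hx) as [[Hq0 Hq1] Hq2].
  pose proof (P5 _ (conj Hq0 Hq1)). unfold Fx in H1. rewrite Hq2 in H0.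
  set (F := Fp (sqrt (1 - x))) in *. set (g := gx x) in *. set (rr := r x) in *.
  assert ((rr - F) * (rr - g) < 0).
  { replace ((rr - F) * (rr - g)) with (- ((rr - F) * (g - rr))) by ring.
    assert (0 < (rr - F) * (g - rr)) by (apply Rmult_lt_0_compat; lra). lra. }
  nra.
Qed.

Lemma Dn_neg x : 0 < x < 1 -> Dn x < 0.
Proof.
  intros Hx. pose proof (Dquad_neg x Hx). pose proof (KK_pos x ltac:(lra)).
  unfold r in H. unfold Dn.
  replace (2 * EE x ^ 2 - 2 * EE x * KK x + x * (1 - x) * KK x ^ 2)
    with (KK x ^ 2 * (2 * (EE x / KK x) ^ 2 - 2 * (EE x / KK x) + x * (1 - x))) by (field; lra).
  assert (0 < KK x ^ 2) by (apply pow_lt; lra). nra.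
Qed.

Lemma phi2_deriv x : 0 < x < 1 ->
  is_derive phi2 x (KK x ^ 4 * Qf x (1 - r x) / (2 * Dn x ^ 2)).
Proof.
  intros Hx.
  pose proof (KK_pos x ltac:(lra)). pose proof (Dn_neg x Hx).
  assert (HdE : Derive (fun y => EE y) x = (EE x - KK x) / (2 * x)) by (apply is_derive_unique; apply EE_deriv; auto).
  assert (HdK : Derive (fun y => KK y) x = (EE x - (1 - x) * KK x) / (2 * x * (1 - x))) by (apply is_derive_unique; apply KK_deriv; auto).
  assert (eE : ex_derive (fun y => EE y) x) by (eexists; apply EE_deriv; auto).
  assert (eK : ex_derive (fun y => KK y) x) by (eexists; apply KK_deriv; auto).
  unfold phi2, Dn in *.
  auto_derive.
  - repeat split; auto; lra.
  - rewrite HdE, HdK. unfold Qf, r. field. repeat split; lra.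
Qed.

Lemma Qf_neg x : 0 < x < 1 -> Qf x (1 - r x) < 0.
Proof.
  intros Hx. destruct (r_between x Hx) as [H1 H2].
  pose proof (r_le1 x ltac:(lra)).
  destruct (sq_facts x Hx) as [[Hq0 Hq1] Hq2].
  pose proof (P2 _ (conj Hq0 Hq1)). pose proof (P3 _ (conj Hq0 Hq1)).
  unfold Fx in H1. rewrite Hq2 in H0, H3.
  set (F := Fp (sqrt (1 - x))) in *. set (rr := r x) in *.
  set (t := 1 - rr). set (T := 1 - F).
  assert (HT : - Qf x T > 0) by (unfold Qf, T; lra).
  assert (Hdiff : Qf x t - Qf x T = (t - T) * (2 * (2 - 3 * x) * (t + T) + 4 * x)) by (unfold Qf; ring).
  assert (Hpos : 0 < 2 * (2 - 3 * x) * (t + T) + 4 * x).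
  { unfold t, T. destruct (Rle_lt_dec 0 (2 - 3 * x)).
    - assert (0 <= 2 * (2 - 3 * x) * (1 - rr + (1 - F))) by (apply Rmult_le_pos; [lra| lra]). lra.
    - assert (2 * (2 - 3 * x) * (1 - rr + (1 - F)) >= 2 * (2 - 3 * x) * 2) by nra. lra. }
  assert (t - T < 0) by (unfold t, T; lra).
  assert ((t - T) * (2 * (2 - 3 * x) * (t + T) + 4 * x) < 0).
  { replace ((t - T) * (2 * (2 - 3 * x) * (t + T) + 4 * x)) with (- ((T - t) * (2 * (2 - 3 * x) * (t + T) + 4 * x))) by ring.
    assert (0 < (T - t) * (2 * (2 - 3 * x) * (t + T) + 4 * x)) by (apply Rmult_lt_0_compat; lra). lra. }
  lra.
Qed.

Lemma dphi_neg x : 0 < x < 1 -> KK x ^ 4 * Qf x (1 - r x) / (2 * Dn x ^ 2) < 0.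
Proof.
  intros Hx. pose proof (Qf_neg x Hx). pose proof (KK_pos x ltac:(lra)). pose proof (Dn_neg x Hx).
  assert (0 < KK x ^ 4) by (apply pow_lt; lra).
  assert (0 < 2 * Dn x ^ 2) by (assert (0 < Dn x ^ 2) by (apply pow2_gt_0; lra); lra).
  unfold Rdiv. assert (0 < / (2 * Dn x ^ 2)) by (apply Rinv_0_lt_compat; lra).
  assert (KK x ^ 4 * Qf x (1 - r x) < 0) by nra. nra.
Qed.

Lemma phi_deriv x : 0 < x < 1 -> is_derive phi x (KK x ^ 4 * Qf x (1 - r x) / (2 * Dn x ^ 2)).
Proof.
  intros Hx. apply (is_derive_ext_loc (V:=R_NormedModule) phi2 phi).
  exists (mkposreal x (proj1 Hx)). intros y Hy. simpl in Hy. unfold ball in Hy; simpl in Hy.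
  unfold AbsRing_ball, abs, minus, plus, opp in Hy; simpl in Hy. apply Rabs_lt_between in Hy.
  symmetry. apply phi_eq. lra.
  apply phi2_deriv; auto.
Qed.

Lemma phi_cont x : 0 < x < 1 -> continuity_pt phi x.
Proof. intros. apply continuity_pt_filterlim. apply (ex_derive_continuous (V:=R_NormedModule)).
  eexists. apply phi_deriv; auto. Qed.

Theorem phi_decr x y : 0 < x -> x < y -> y < 1 -> phi y < phi x.
Proof.
  intros H0 H1 H2.
  destruct (MVT_gen phi x y (fun z => KK z ^ 4 * Qf z (1 - r z) / (2 * Dn z ^ 2))) as [c [Hc Hmvt]].
  - intros z Hz. rewrite Rmin_left, Rmax_right in Hz by lra. apply phi_deriv; lra.
  - intros z Hz. rewrite Rmin_left, Rmax_right in Hz by lra. apply phi_cont; lra.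
  - rewrite Rmin_left, Rmax_right in Hc by lra.
    pose proof (dphi_neg c ltac:(lra)). nra.
Qed.

Lemma ln_le_sub1 z : 0 < z -> ln z <= z - 1.
Proof.
  intros Hz. destruct (Req_dec (ln z) 0) as [H|H].
  - rewrite H. assert (z = 1). { rewrite <- (exp_ln z Hz), H. apply exp_0. } lra.
  - pose proof (exp_ineq1 _ H). rewrite exp_ln in H0 by auto. lra.
Qed.

Lemma ln_1mx_bounds x : 0 < x <= 1/2 -> - (2 * x) <= ln (1 - x) <= 0.
Proof.
  intros Hx. split.
  - pose proof (ln_le_sub1 (/ (1 - x)) ltac:(apply Rinv_0_lt_compat; lra)).
    rewrite ln_Rinv in H by lra.
    assert (/ (1 - x) <= 2). { apply Rle_trans with (/ (1/2)). apply Rinv_le_contravar; lra. lra. }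
    assert (/ (1 - x) - 1 <= 2 * x). { apply Rmult_le_reg_r with (1 - x). lra.
      replace ((/ (1 - x) - 1) * (1 - x)) with x by (field; lra). nra. }
    lra.
  - pose proof (ln_le_sub1 (1 - x) ltac:(lra)). lra.
Qed.

Lemma phi2_r x : 0 < x < 1 ->
  phi2 x = / 2 * ln (1 - x) + 2 * x * (r x - 1) / (2 * r x ^ 2 - 2 * r x + x * (1 - x)).
Proof.
  intros Hx. unfold phi2. pose proof (Dn_neg x Hx). pose proof (Dquad_neg x Hx).
  pose proof (KK_pos x ltac:(lra)). unfold Dn, r in *. f_equal. field. repeat split; lra.
Qed.

Lemma r_near0 x : 0 < x < 1 -> gx x - x ^ 3 / 2 <= r x <= gx x.
Proof.
  intros Hx. destruct (r_between x Hx) as [H1 H2].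
  destruct (sq_facts x Hx) as [[Hq0 Hq1] Hq2].
  pose proof (P6 _ (conj Hq0 Hq1)). unfold Fx in H1. rewrite Hq2 in H. replace (1 - (1 - x)) with x in H by ring.
  set (q := sqrt (1 - x)) in *.
  assert (Hqx : 0 <= 1 - q <= x) by (split; nra).
  assert ((1 - q) ^ 3 <= x ^ 3) by (apply pow_incr; lra).
  unfold gx in *. split; lra.
Qed.

Theorem lim0 eps : 0 < eps -> exists d, 0 < d /\ forall x, 0 < x < d -> Rabs (phi x - 8/5) < eps.
Proof.
  intros He. exists (Rmin (1/10) (eps / 6)). split. apply Rmin_pos; lra.
  intros x Hx. pose proof (Rmin_l (1/10) (eps/6)). pose proof (Rmin_r (1/10) (eps/6)).
  assert (Hx1 : 0 < x <= 1/10) by lra.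
  rewrite phi_eq by lra. rewrite phi2_r by lra.
  pose proof (r_near0 x ltac:(lra)). pose proof (ln_1mx_bounds x ltac:(lra)).
  set (tau := (r x - gx x) / x ^ 3).
  assert (Hx3 : 0 < x ^ 3) by (apply pow_lt; lra).
  assert (Hr : r x = gx x + x ^ 3 * tau) by (unfold tau; field; lra).
  assert (Htau : -1/2 <= tau <= 0) by (split; nra).
  rewrite Hr. unfold gx. clear Hr H1.
  set (L := ln (1 - x)) in *.
  assert (Hden : 2 * (1 - x / 2 - x ^ 2 / 16 + x ^ 3 * tau) ^ 2 - 2 * (1 - x / 2 - x ^ 2 / 16 + x ^ 3 * tau) + x * (1 - x)
     = x ^ 2 * (-5/8 + x/8 + x^2/128 + 2 * x * tau - 2 * x^2 * tau - x^3 * tau / 4 + 2 * x^4 * tau^2)) by field.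
  set (dd := -5/8 + x/8 + x^2/128 + 2 * x * tau - 2 * x^2 * tau - x^3 * tau / 4 + 2 * x^4 * tau^2) in *.
  assert (Hxt : - x / 2 <= x * tau <= 0) by (split; nra).
  assert (Hx2t : - x ^ 2 / 2 <= x ^ 2 * tau <= 0) by (assert (0 < x^2) by (apply pow_lt; lra); split; nra).
  assert (Hx2 : x ^ 2 <= 1/100) by (simpl; nra).
  assert (Hx3' : x ^ 3 <= 1/1000) by (simpl; nra).
  assert (Hx4 : 0 <= x ^ 4 <= 1/10000) by (simpl; split; nra).
  assert (Hx3t : - x ^ 3 / 2 <= x ^ 3 * tau <= 0) by (split; nra).
  assert (Ht2 : 0 <= tau ^ 2 <= 1/4) by (simpl; split; nra).
  assert (Hx4t : 0 <= x ^ 4 * tau ^ 2 <= 1/40000) by (split; nra).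
  assert (Hdd : dd <= -3/5) by (unfold dd; nra).
  set (nn := -13/8 - x/16 - 16 * tau + 26 * x * tau + 2 * x ^ 2 * tau - 16 * x ^ 3 * tau ^ 2).
  assert (Hx3t2 : 0 <= x ^ 3 * tau ^ 2 <= 1/4000) by (split; nra).
  assert (Hnn : -12 <= nn <= 12) by (unfold nn; split; nra).
  assert (Heq : / 2 * L + 2 * x * (1 - x / 2 - x ^ 2 / 16 + x ^ 3 * tau - 1) /
     (2 * (1 - x / 2 - x ^ 2 / 16 + x ^ 3 * tau) ^ 2 - 2 * (1 - x / 2 - x ^ 2 / 16 + x ^ 3 * tau) + x * (1 - x)) - 8 / 5
     = / 2 * L + (x * nn) * / (5 * dd)).
  { rewrite Hden. unfold nn, dd. field. split. unfold dd in Hdd. lra. lra. }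
  rewrite Heq.
  assert (Hinv : - / 3 <= / (5 * dd) < 0).
  { split. apply Ropp_le_cancel. rewrite Ropp_involutive. rewrite <- Rinv_opp.
    apply Rinv_le_contravar; lra. apply Rinv_lt_0_compat; lra. }
  assert (Hxn : - 12 * x <= x * nn <= 12 * x) by (split; nra).
  assert (Hp : -4 * x <= (x * nn) * / (5 * dd) <= 4 * x) by (split; nra).
  apply Rabs_lt_between. split; lra.
Qed.

Lemma ln_sqrt' y : 0 < y -> ln (sqrt y) = ln y / 2.
Proof. intros. pose proof (sqrt_lt_R0 y H).
  rewrite <- (sqrt_sqrt y) at 2 by lra. rewrite ln_mult by lra. field. Qed.

Lemma trig_facts t : 0 <= t <= PI/2 -> 0 <= cos t /\ 0 <= sin t /\ sin t <= 1 /\ cos t ^ 2 + sin t ^ 2 = 1.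
Proof. intros Ht. pose proof PI_RGT_0. split. apply cos_ge_0; lra. split. apply sin_ge_0; lra.
  split. apply SIN_bound. pose proof (sin2_cos2 t). unfold Rsqr in H0. simpl. lra. Qed.

Lemma J_int a : 0 < a < 1 ->
  is_RInt (fun t => sin t / sqrt (1 - a ^ 2 * sin t ^ 2)) 0 (PI/2) ((ln (1 + a) - ln (1 - a ^ 2) / 2) / a).
Proof.
  intros Ha.
  assert (HI : is_RInt (fun t => sin t / sqrt (1 - a ^ 2 * sin t ^ 2)) 0 (PI/2)
     (minus ((fun t => - ln (a * cos t + sqrt (1 - a ^ 2 * sin t ^ 2)) / a) (PI/2))
            ((fun t => - ln (a * cos t + sqrt (1 - a ^ 2 * sin t ^ 2)) / a) 0))).
  { apply (is_RInt_derive (V:=R_CompleteNormedModule) (fun t => - ln (a * cos t + sqrt (1 - a ^ 2 * sin t ^ 2)) / a)).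
    - intros t Ht. rewrite Rmin_left, Rmax_right in Ht by (pose proof PI2_pos; lra).
      destruct (trig_facts t Ht) as [Hc [Hs [Hs1 Hcs]]].
      pose proof (Dl_pos (a^2) t ltac:(nra)) as H0.
      pose proof (sqrt_lt_R0 _ H0) as H1. pose proof (sqrt_sqrt _ (Rlt_le _ _ H0)) as H2.
      auto_derive.
      + replace (1 + - (a * (a * 1) * (sin t * (sin t * 1)))) with (1 - a^2 * sin t ^ 2) by ring.
        repeat split; try lra. nra.
      + replace (1 + - (a * (a * 1) * (sin t * (sin t * 1)))) with (1 - a^2 * sin t ^ 2) by ring.
        set (D := sqrt (1 - a ^ 2 * sin t ^ 2)) in *.
        match goal with |- ?l = ?r => change (@eq R l r) end.
        field. repeat split; try lra. nra.
    - intros t Ht. rewrite Rmin_left, Rmax_right in Ht by (pose proof PI2_pos; lra).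
      pose proof (Dl_pos (a^2) t ltac:(nra)) as H0. pose proof (sqrt_lt_R0 _ H0) as H1.
      apply (ex_derive_continuous (V:=R_NormedModule)). auto_derive.
      replace (1 + - (a * (a * 1) * (sin t * (sin t * 1)))) with (1 - a^2 * sin t ^ 2) by ring.
      repeat split; lra. }
  assert (Hv : minus ((fun t => - ln (a * cos t + sqrt (1 - a ^ 2 * sin t ^ 2)) / a) (PI/2))
            ((fun t => - ln (a * cos t + sqrt (1 - a ^ 2 * sin t ^ 2)) / a) 0) = (ln (1 + a) - ln (1 - a ^ 2) / 2) / a).
  { cbv beta. rewrite cos_PI2, sin_PI2, cos_0, sin_0.
    replace (1 - a ^ 2 * 1 ^ 2) with (1 - a^2) by ring.
    replace (1 - a ^ 2 * 0 ^ 2) with 1 by ring. rewrite sqrt_1.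
    replace (a * 0 + sqrt (1 - a ^ 2)) with (sqrt (1 - a^2)) by ring.
    rewrite ln_sqrt' by nra. replace (a * 1 + 1) with (1 + a) by ring.
    unfold minus, plus, opp; simpl. field. lra. }
  cbv beta in HI, Hv. rewrite Hv in HI. exact HI.
Qed.

Lemma L_int : is_RInt (fun t => cos t / (1 + sin t)) 0 (PI/2) (ln 2).
Proof.
  assert (HI : is_RInt (fun t => cos t / (1 + sin t)) 0 (PI/2)
     (minus ((fun t => ln (1 + sin t)) (PI/2)) ((fun t => ln (1 + sin t)) 0))).
  { apply (is_RInt_derive (V:=R_CompleteNormedModule) (fun t => ln (1 + sin t))).
    - intros t Ht. rewrite Rmin_left, Rmax_right in Ht by (pose proof PI2_pos; lra).
      destruct (trig_facts t Ht) as [Hc [Hs [Hs1 Hcs]]].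
      auto_derive. lra. field. lra.
    - intros t Ht. rewrite Rmin_left, Rmax_right in Ht by (pose proof PI2_pos; lra).
      destruct (trig_facts t Ht) as [Hc [Hs [Hs1 Hcs]]].
      apply (ex_derive_continuous (V:=R_NormedModule)). auto_derive. lra. }
  cbv beta in HI. rewrite sin_PI2, sin_0 in HI.
  replace (minus (ln (1 + 1)) (ln (1 + 0))) with (ln 2) in HI. exact HI.
  replace (1 + 0) with 1 by ring. rewrite ln_1. unfold minus, plus, opp; simpl.
  replace (1 + 1) with 2 by ring. ring.
Qed.

Lemma R_int a : 0 < a < 1 ->
  is_RInt (fun t => cos t / (1 - a ^ 2 * sin t ^ 2)) 0 (PI/2) ((ln (1 + a) - ln (1 - a)) / (2 * a)).
Proof.
  intros Ha.
  assert (HI : is_RInt (fun t => cos t / (1 - a ^ 2 * sin t ^ 2)) 0 (PI/2)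
     (minus ((fun t => (ln (1 + a * sin t) - ln (1 - a * sin t)) / (2 * a)) (PI/2))
            ((fun t => (ln (1 + a * sin t) - ln (1 - a * sin t)) / (2 * a)) 0))).
  { apply (is_RInt_derive (V:=R_CompleteNormedModule) (fun t => (ln (1 + a * sin t) - ln (1 - a * sin t)) / (2 * a))).
    - intros t Ht. rewrite Rmin_left, Rmax_right in Ht by (pose proof PI2_pos; lra).
      destruct (trig_facts t Ht) as [Hc [Hs [Hs1 Hcs]]].
      assert (a * sin t < 1) by nra. assert (0 <= a * sin t) by nra.
      auto_derive. repeat split; lra.
      match goal with |- ?l = ?r => change (@eq R l r) end.
      field. repeat split; try lra. nra.
    - intros t Ht. rewrite Rmin_left, Rmax_right in Ht by (pose proof PI2_pos; lra).
      destruct (trig_facts t Ht) as [Hc [Hs [Hs1 Hcs]]].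
      assert (a * sin t < 1) by nra.
      apply (ex_derive_continuous (V:=R_NormedModule)). auto_derive. nra. }
  cbv beta in HI. rewrite sin_PI2, sin_0 in HI.
  replace (minus ((ln (1 + a * 1) - ln (1 - a * 1)) / (2 * a)) ((ln (1 + a * 0) - ln (1 - a * 0)) / (2 * a)))
    with ((ln (1 + a) - ln (1 - a)) / (2 * a)) in HI. exact HI.
  replace (1 + a * 0) with 1 by ring. replace (1 - a * 0) with 1 by ring. rewrite ln_1.
  replace (1 + a * 1) with (1 + a) by ring. replace (1 - a * 1) with (1 - a) by ring.
  unfold minus, plus, opp; simpl. field. lra.
Qed.

Lemma cos_int : is_RInt cos 0 (PI/2) 1.
Proof.
  assert (HI : is_RInt cos 0 (PI/2) (minus (sin (PI/2)) (sin 0))).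
  { apply (is_RInt_derive (V:=R_CompleteNormedModule) sin cos).
    - intros t _. auto_derive; auto. ring.
    - intros t _. apply continuous_cos. }
  rewrite sin_PI2, sin_0 in HI. replace (minus 1 0) with 1 in HI. exact HI.
  unfold minus, plus, opp; simpl. ring.
Qed.

Lemma pt_facts a t : 0 < a < 1 -> 0 <= t <= PI/2 ->
  let D := sqrt (1 - a ^ 2 * sin t ^ 2) in
  0 < D /\ D * D = 1 - a ^ 2 * sin t ^ 2 /\ cos t <= D /\ 0 <= cos t /\ 0 <= sin t <= 1 /\ cos t ^ 2 + sin t ^ 2 = 1.
Proof.
  intros Ha Ht D. destruct (trig_facts t Ht) as [Hc [Hs [Hs1 Hcs]]].
  pose proof (Dl_pos (a^2) t ltac:(nra)) as H0.
  pose proof (sqrt_lt_R0 _ H0) as H1. pose proof (sqrt_sqrt _ (Rlt_le _ _ H0)) as H2.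
  fold D in H1, H2. repeat split; auto.
  assert (Ha2 : a ^ 2 <= 1) by nra. assert (Hs2 : 0 <= sin t ^ 2) by nra.
  assert (a ^ 2 * sin t ^ 2 <= sin t ^ 2) by nra.
  assert (Hcd : cos t * cos t <= D * D) by (simpl in *; nra). nra.
Qed.

Lemma ptK_up a t : 0 < a < 1 -> 0 <= t <= PI/2 ->
  / sqrt (1 - a ^ 2 * sin t ^ 2) - sin t / sqrt (1 - a ^ 2 * sin t ^ 2) <= cos t / (1 + sin t).
Proof.
  intros Ha Ht. destruct (pt_facts a t Ha Ht) as [H1 [H2 [H3 [Hc [Hs Hcs]]]]].
  set (D := sqrt (1 - a ^ 2 * sin t ^ 2)) in *.
  replace (/ D - sin t / D) with ((1 - sin t) * (1 + sin t) * / ((1 + sin t) * D)) by (field; lra).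
  replace (cos t / (1 + sin t)) with (cos t * D * / ((1 + sin t) * D)) by (field; lra).
  apply Rmult_le_compat_r. left. apply Rinv_0_lt_compat. nra.
  nra.
Qed.

Lemma ptK_lo a t : 0 < a < 1 -> 0 <= t <= PI/2 ->
  cos t / (1 + sin t) - (1 - a ^ 2) * (cos t / (1 - a ^ 2 * sin t ^ 2)) <=
  / sqrt (1 - a ^ 2 * sin t ^ 2) - sin t / sqrt (1 - a ^ 2 * sin t ^ 2).
Proof.
  intros Ha Ht. destruct (pt_facts a t Ha Ht) as [H1 [H2 [H3 [Hc [Hs Hcs]]]]].
  set (D := sqrt (1 - a ^ 2 * sin t ^ 2)) in *. rewrite <- H2.
  replace (/ D - sin t / D) with ((1 - sin t) * (1 + sin t) * D * / ((1 + sin t) * (D * D))) by (field; lra).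
  replace (cos t / (1 + sin t) - (1 - a ^ 2) * (cos t / (D * D))) with ((cos t * (D * D) - (1 - a^2) * cos t * (1 + sin t)) * / ((1 + sin t) * (D * D))) by (field; lra).
  apply Rmult_le_compat_r. left. apply Rinv_0_lt_compat. nra.
  assert (Hcd : cos t * cos t <= cos t * D) by nra.
  assert (Hys : (1 - a^2) * sin t ^ 2 <= (1 - a^2) * (1 + sin t)) by (apply Rmult_le_compat_l; nra).
  assert (Hb : D * D - cos t * D - (1 - a^2) * (1 + sin t) <= 0) by (simpl in Hcs, Hys; nra).
  assert (cos t * (D * D - cos t * D - (1 - a^2) * (1 + sin t)) <= 0) by nra.
  nra.
Qed.

Lemma exJ a : 0 < a < 1 -> ex_RInt (fun t => sin t / sqrt (1 - a ^ 2 * sin t ^ 2)) 0 (PI/2).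
Proof. intros. eexists. apply J_int; auto. Qed.

Lemma KK_split a : 0 < a < 1 ->
  KK (a ^ 2) = (ln (1 + a) - ln (1 - a ^ 2) / 2) / a +
     RInt (fun t => / sqrt (1 - a ^ 2 * sin t ^ 2) - sin t / sqrt (1 - a ^ 2 * sin t ^ 2)) 0 (PI/2).
Proof.
  intros Ha.
  rewrite (RInt_ext (fun t => / sqrt (1 - a ^ 2 * sin t ^ 2) - sin t / sqrt (1 - a ^ 2 * sin t ^ 2))
    (fun t => 1 * (/ sqrt (1 - a ^ 2 * sin t ^ 2)) + (-1) * (sin t / sqrt (1 - a ^ 2 * sin t ^ 2)))).
  2:{ intros t _. match goal with |- ?l = ?r => change (@eq R l r) end. ring. }
  rewrite (RInt_lin2 (fun t => / sqrt (1 - a ^ 2 * sin t ^ 2)) (fun t => sin t / sqrt (1 - a ^ 2 * sin t ^ 2))).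
  2:{ apply exK. nra. } 2:{ apply exJ; auto. }
  rewrite (is_RInt_unique _ _ _ _ (J_int a Ha)). unfold KK. match goal with |- ?l = ?r => change (@eq R l r) end. lra.
Qed.

Lemma KK_upper a : 0 < a < 1 -> KK (a ^ 2) <= (ln (1 + a) - ln (1 - a ^ 2) / 2) / a + ln 2.
Proof.
  intros Ha. rewrite (KK_split a Ha). apply Rplus_le_compat_l.
  rewrite <- (is_RInt_unique _ _ _ _ L_int).
  apply RInt_le. pose proof PI2_pos; lra.
  apply (ex_RInt_minus (V:=R_NormedModule)). apply exK; nra. apply exJ; auto.
  eexists; apply L_int.
  intros t Ht. apply ptK_up; auto. lra.
Qed.

Lemma KK_lower a : 0 < a < 1 ->
  (ln (1 + a) - ln (1 - a ^ 2) / 2) / a + ln 2 - (1 - a ^ 2) * ((ln (1 + a) - ln (1 - a)) / (2 * a)) <= KK (a ^ 2).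
Proof.
  intros Ha. rewrite (KK_split a Ha). unfold Rminus at 1. rewrite Rplus_assoc. apply Rplus_le_compat_l.
  rewrite <- (is_RInt_unique _ _ _ _ L_int).
  rewrite <- (is_RInt_unique _ _ _ _ (R_int a Ha)).
  replace (RInt (fun t : R => cos t / (1 + sin t)) 0 (PI / 2) +
     - ((1 - a ^ 2) * RInt (fun t : R => cos t / (1 - a ^ 2 * sin t ^ 2)) 0 (PI / 2)))
   with (RInt (fun t => 1 * (cos t / (1 + sin t)) + (- (1 - a ^ 2)) * (cos t / (1 - a ^ 2 * sin t ^ 2))) 0 (PI / 2)).
  2:{ rewrite RInt_lin2. match goal with |- ?l = ?r => change (@eq R l r) end. lra. eexists; apply L_int. eexists; apply R_int; auto. }
  apply RInt_le. pose proof PI2_pos; lra.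
  apply (ex_RInt_plus (V:=R_NormedModule)).
  apply (ex_RInt_scal (V:=R_NormedModule)). eexists; apply L_int.
  apply (ex_RInt_scal (V:=R_NormedModule)). eexists; apply R_int; auto.
  apply (ex_RInt_minus (V:=R_NormedModule)). apply exK; nra. apply exJ; auto.
  intros t Ht. pose proof (ptK_lo a t Ha ltac:(lra)). lra.
Qed.

Lemma EE_bounds a : 0 < a < 1 -> 1 <= EE (a ^ 2) <= 1 + PI / 2 * sqrt (1 - a ^ 2).
Proof.
  intros Ha. pose proof (sqrt_lt_R0 (1 - a^2) ltac:(nra)) as Hb.
  pose proof (sqrt_sqrt (1 - a^2) ltac:(nra)) as Hb2.
  set (b := sqrt (1 - a ^ 2)) in *.
  split.
  - rewrite <- (is_RInt_unique _ _ _ _ cos_int). unfold EE.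
    apply RInt_le. pose proof PI2_pos; lra. eexists; apply cos_int. apply exE; nra.
    intros t Ht. destruct (pt_facts a t Ha ltac:(lra)) as [H1 [H2 [H3 _]]]. lra.
  - assert (Hc : is_RInt (fun t => 1 * cos t + b * 1) 0 (PI/2) (1 * 1 + b * (PI/2))).
    { apply (is_RInt_plus (V:=R_NormedModule) (fun t => 1 * cos t) (fun t => b * 1)).
      apply (is_RInt_scal (V:=R_NormedModule)). apply cos_int.
      apply (is_RInt_scal (V:=R_NormedModule)).
      pose proof (is_RInt_const (V:=R_NormedModule) 0 (PI/2) 1) as Hk.
      assert (E : (PI/2 - 0) * 1 = PI/2) by ring.
      exact (eq_rect _ (fun v => is_RInt (fun _ : R => 1) 0 (PI / 2) v) Hk _ E). }
    replace (1 + PI / 2 * b) with (1 * 1 + b * (PI/2)) by ring.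
    rewrite <- (is_RInt_unique _ _ _ _ Hc). unfold EE.
    apply RInt_le. pose proof PI2_pos; lra. apply exE; nra. eexists; apply Hc.
    intros t Ht. destruct (pt_facts a t Ha ltac:(lra)) as [H1 [H2 [H3 [Hc0 [Hs Hcs]]]]].
    set (D := sqrt (1 - a ^ 2 * sin t ^ 2)) in *.
    assert (D * D <= (cos t + b) * (cos t + b)).
    { rewrite H2. assert (a ^ 2 * sin t ^ 2 <= sin t ^ 2) by (assert (a^2 <= 1) by nra; nra).
      assert (0 <= cos t * b) by nra. simpl in Hcs. nra. }
    nra.
Qed.

Lemma ln2_bounds : / 2 < ln 2 <= 1.
Proof. split. apply ln_lt_2. pose proof (ln_le_sub1 2 ltac:(lra)). lra. Qed.

Lemma ln_nonneg z : 1 <= z -> 0 <= ln z.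
Proof. intros. destruct (Req_dec z 1). subst. rewrite ln_1; lra.
  rewrite <- ln_1. left. apply ln_increasing; lra. Qed.

Lemma ln_le_mono u w : 0 < u -> u <= w -> ln u <= ln w.
Proof. intros. destruct (Req_dec u w). subst; lra. left. apply ln_increasing; lra. Qed.

Lemma core_est (K E y L b v x : R) :
  0 < v <= 1/100 -> b = v * v -> y = b * b -> 8 <= L -> L <= 4 / v -> x = 1 - y ->
  Rabs (K - L / 2 - 2 * ln 2) <= 3 * y + y * L ->
  1 <= E <= 1 + 2 * b -> E <= K ->
  Rabs (/ 2 * (- L) + 2 * x * K * (E - K) / (2 * E ^ 2 - 2 * E * K + x * (1 - x) * K ^ 2) - 2 * ln 2) <= 80 * v.
Proof.
  intros Hv Hb Hy HL HLv Hx HK HE HEK.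
  pose proof ln2_bounds.
  assert (HvL : v * L <= 4). { assert (4 / v * v = 4) by (field; lra). nra. }
  assert (Hb0 : 0 < b <= 1/10000) by (subst; split; nra).
  assert (Hy0 : 0 < y <= b) by (subst; split; nra).
  assert (HbL : b * L <= 4 * v) by (subst b; nra).
  assert (HbL0 : 0 <= b * L) by nra.
  assert (HyL : y * L <= 4 * v). { assert (y * L = b * (b * L)) by (subst y; ring). nra. }
  assert (HyL2 : y * (L * L) <= 16 * v * v). { assert (y * (L * L) = (b * L) * (b * L)) by (subst y; ring). nra. }
  apply Rabs_le_between in HK.
  set (T := K - L / 2 - 2 * ln 2) in *.
  assert (HKe : K = L / 2 + 2 * ln 2 + T) by (unfold T; ring).
  assert (HT : -1/10 <= T <= 1/10) by nra.
  assert (HK1 : L / 2 <= K <= L / 2 + 3) by lra.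
  set (Dn := 2 * E ^ 2 - 2 * E * K + x * (1 - x) * K ^ 2).
  assert (HK2 : K ^ 2 <= L * L + 18) by (clear - HK1 HL; simpl; nra).
  assert (HyK2 : y * K ^ 2 <= y * (L * L) + 18 * y).
  { assert (y * K ^ 2 <= y * (L * L + 18)) by (apply Rmult_le_compat_l; lra). lra. }
  assert (Hxy : x * (1 - x) * K ^ 2 <= y * K ^ 2).
  { apply Rmult_le_compat_r. apply pow2_ge_0. subst x. clear - Hy0. nra. }
  assert (HE2 : 2 * E ^ 2 - 2 * E * K <= - 2 * (K - E)) by (clear - HE HEK; simpl; nra).
  assert (Hv2 : v * v <= v) by (clear - Hv; nra).
  assert (HDn : Dn <= - K) by (unfold Dn; lra).
  assert (HKp : 4 <= K) by lra.
  assert (Hid : / 2 * - L + 2 * x * K * (E - K) / Dn - 2 * ln 2 =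
     T + K * (2 * (E - x) * (K - E) - x * (1 - x) * K ^ 2) / Dn).
  { unfold T, Dn. field. unfold Dn in HDn. lra. }
  rewrite Hid.
  set (B := 2 * (E - x) * (K - E) - x * (1 - x) * K ^ 2).
  assert (HEx : 0 <= E - x <= 3 * b) by (subst x; lra).
  assert (HP1 : 0 <= (E - x) * (K - E) <= 3 * b * K).
  { split. apply Rmult_le_pos; lra.
    apply Rle_trans with ((3 * b) * K). apply Rmult_le_compat; lra. lra. }
  assert (HP2 : 0 <= x * (1 - x) * K ^ 2) by (apply Rmult_le_pos; [subst x; clear - Hy0 Hb0; nra | apply pow2_ge_0]).
  assert (HB : Rabs B <= 6 * b * K + y * K ^ 2).
  { unfold B. apply Rabs_le_between. split; lra. }
  assert (HQ : Rabs (K * B / Dn) <= Rabs B).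
  { unfold Rdiv. rewrite !Rabs_mult. rewrite Rabs_inv.
    rewrite (Rabs_left Dn) by lra. rewrite (Rabs_pos_eq K) by lra.
    assert (0 <= Rabs B) by apply Rabs_pos.
    assert (K * / - Dn <= 1). { apply Rmult_le_reg_r with (- Dn). lra.
      rewrite Rmult_assoc, Rinv_l by lra. lra. }
    assert (0 < / - Dn) by (apply Rinv_0_lt_compat; lra).
    replace (K * Rabs B * / - Dn) with ((K * / - Dn) * Rabs B) by ring.
    apply Rle_trans with (1 * Rabs B). apply Rmult_le_compat_r; lra. lra. }
  apply Rle_trans with (Rabs T + Rabs (K * B / Dn)). apply Rabs_triang.
  assert (Rabs T <= 3 * y + y * L) by (apply Rabs_le_between; lra).
  assert (H6 : 6 * b * K <= 3 * b * L + 18 * b).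
  { assert (b * K <= b * (L / 2 + 3)) by (apply Rmult_le_compat_l; lra). lra. }
  assert (b <= v) by (subst b; clear - Hv; nra). assert (y <= v) by lra.
  lra.
Qed.

Lemma K_est a : 1/2 <= a < 1 ->
  Rabs (KK (a ^ 2) - (- ln (1 - a ^ 2)) / 2 - 2 * ln 2) <= 3 * (1 - a ^ 2) + (1 - a ^ 2) * (- ln (1 - a ^ 2)).
Proof.
  intros Ha.
  pose proof (KK_upper a ltac:(lra)) as Hu. pose proof (KK_lower a ltac:(lra)) as Hl.
  set (y := 1 - a ^ 2) in *. set (L := - ln y).
  assert (Hy : 0 < y <= 1) by (unfold y; split; nra).
  assert (Hln1a : ln (1 - a) = - L - ln (1 + a)).
  { unfold L. replace y with ((1 - a) * (1 + a)) by (unfold y; ring). rewrite ln_mult by lra. ring. }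
  rewrite Hln1a in Hl. fold L in Hu, Hl.
  replace (- ln y) with L in Hu, Hl by reflexivity.
  assert (HL : 0 <= L). { unfold L. assert (ln y <= 0). { pose proof (ln_le_sub1 y ltac:(lra)). lra. } lra. }
  pose proof ln2_bounds as Hl2.
  set (l := ln (1 + a)) in *.
  assert (Hl0 : 0 <= l <= ln 2). { unfold l. split. apply ln_nonneg; lra. apply ln_le_mono; lra. }
  assert (Hl1 : ln 2 - l <= y).
  { unfold l. replace (ln 2 - ln (1 + a)) with (ln (2 / (1 + a))).
    pose proof (ln_le_sub1 (2 / (1 + a)) ltac:(apply Rdiv_lt_0_compat; lra)).
    assert (2 / (1 + a) - 1 <= y). { unfold y. apply Rmult_le_reg_r with (1 + a). lra.
      replace ((2 / (1 + a) - 1) * (1 + a)) with (1 - a) by (field; lra). nra. } lra.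
    unfold Rdiv. rewrite ln_mult; [rewrite ln_Rinv; [ring|lra] | lra | apply Rinv_0_lt_compat; lra]. }
  set (u := / a).
  assert (Hau : a * u = 1) by (unfold u; field; lra).
  assert (Hu1 : 1 <= u <= 2).
  { unfold u. split. apply Rle_trans with (/ 1). rewrite Rinv_1; lra. apply Rinv_le_contravar; lra.
    apply Rle_trans with (/ (1/2)). apply Rinv_le_contravar; lra. lra. }
  assert (Hu2 : u - 1 <= 2 * y). { assert (u - 1 = (1 - a) * u) by nra. unfold y. nra. }
  replace ((l - - L / 2) / a) with ((l + L / 2) * u) in Hu, Hl by (unfold u; field; lra).
  replace ((l - (- L - l)) / (2 * a)) with ((2 * l + L) * u / 2) in Hl by (unfold u; field; lra).
  apply Rabs_le_between.
  assert (HA : (l + L / 2) * u - (l + L / 2) <= (1 + L / 2) * (2 * y)).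
  { replace ((l + L / 2) * u - (l + L / 2)) with ((l + L / 2) * (u - 1)) by ring.
    apply Rmult_le_compat; lra. }
  assert (HB0 : 0 <= (l + L / 2) * u - (l + L / 2)).
  { replace ((l + L / 2) * u - (l + L / 2)) with ((l + L / 2) * (u - 1)) by ring.
    apply Rmult_le_pos; lra. }
  assert (HC : y * ((2 * l + L) * u / 2) <= y * (2 + L)).
  { apply Rmult_le_compat_l. lra.
    assert ((2 * l + L) * u <= (2 + L) * 2) by (apply Rmult_le_compat; lra). lra. }
  assert (Hr : (l - ln y / 2) / a = (l + L / 2) * u) by (unfold u, L; field; lra).
  rewrite Hr in Hu, Hl. split; lra.
Qed.

Theorem lim1 eps : 0 < eps -> exists d, 0 < d /\ forall x, 1 - d < x < 1 -> Rabs (phi x - ln 4) < eps.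
Proof.
  intros He.
  set (v0 := Rmin (1/100) (Rmin (eps / 100) (exp (-2)))).
  assert (Hv0 : 0 < v0 <= 1/100 /\ v0 <= eps / 100 /\ v0 <= exp (-2)).
  { unfold v0. pose proof (exp_pos (-2)).
    pose proof (Rmin_l (1/100) (Rmin (eps / 100) (exp (-2)))).
    pose proof (Rmin_r (1/100) (Rmin (eps / 100) (exp (-2)))).
    pose proof (Rmin_l (eps / 100) (exp (-2))). pose proof (Rmin_r (eps / 100) (exp (-2))).
    repeat split; try lra. apply Rmin_pos; [lra| apply Rmin_pos; lra]. }
  destruct Hv0 as [[Hv0a Hv0b] [Hv0c Hv0d]].
  exists (v0 ^ 4). split. apply pow_lt; lra.
  intros x Hx.
  assert (Hv04 : v0 ^ 4 <= 1/100) by (assert (v0 ^ 4 <= (1/100) ^ 4) by (apply pow_incr; lra); simpl in *; lra).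
  set (y := 1 - x).
  assert (Hy : 0 < y < v0 ^ 4) by (unfold y; lra).
  set (b := sqrt y). set (v := sqrt b).
  assert (Hb : 0 < b) by (apply sqrt_lt_R0; lra).
  assert (Hv : 0 < v) by (apply sqrt_lt_R0; lra).
  assert (Hbb : b * b = y) by (apply sqrt_sqrt; lra).
  assert (Hvv : v * v = b) by (apply sqrt_sqrt; lra).
  assert (Hvlt : v < v0).
  { destruct (Rlt_or_le v v0); auto. exfalso.
    assert (v0 ^ 4 <= v ^ 4) by (apply pow_incr; lra).
    assert (v ^ 4 = y) by (rewrite <- Hbb, <- Hvv; ring). lra. }
  set (L := - ln y).
  assert (HlnY : ln y = 4 * ln v).
  { rewrite <- Hbb, <- Hvv. rewrite !ln_mult by nra. ring. }
  assert (HL8 : 8 <= L).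
  { unfold L. rewrite HlnY. assert (ln v <= -2).
    { rewrite <- (ln_exp (-2)). apply ln_le_mono; lra. } lra. }
  assert (HLv : L <= 4 / v).
  { unfold L. rewrite HlnY. pose proof (ln_le_sub1 (/ v) ltac:(apply Rinv_0_lt_compat; lra)).
    rewrite ln_Rinv in H by lra. unfold Rdiv. lra. }
  set (a := sqrt x).
  assert (Hx0 : 0 <= x) by lra.
  assert (Hax : a ^ 2 = x) by (apply pow2_sqrt; lra).
  assert (Ha : 1/2 <= a < 1).
  { split. apply Rle_trans with (sqrt (1/4)).
    replace (1/4) with ((1/2)^2) by field. rewrite sqrt_pow2; lra.
    apply sqrt_le_1_alt. lra.
    apply Rlt_le_trans with (sqrt 1). apply sqrt_lt_1_alt. lra. rewrite sqrt_1; lra. }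
  pose proof (K_est a Ha) as HK. rewrite Hax in HK. fold y in HK. fold L in HK.
  pose proof (EE_bounds a ltac:(lra)) as HE. rewrite Hax in HE. fold y b in HE.
  pose proof (EE_le_KK x ltac:(lra)) as HEK.
  rewrite phi_eq by lra. unfold phi2, Dn.
  replace (ln (1 - x)) with (- L) by (unfold L, y; ring).
  replace (ln 4) with (2 * ln 2) by (replace 4 with (2 * 2) by ring; rewrite ln_mult by lra; ring).
  assert (HE2 : 1 <= EE x <= 1 + 2 * b) by (pose proof PI_4; nra).
  assert (Hcore := core_est (KK x) (EE x) y L b v x ltac:(lra) (eq_sym Hvv) (eq_sym Hbb) HL8 HLv ltac:(unfold y; ring) HK HE2 HEK).
  lra.
Qed.

Lemma phi_lt_85 x : 0 < x < 1 -> phi x < 8/5.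
Proof.
  intros Hx. assert (H1 : phi x < phi (x/2)) by (apply phi_decr; lra).
  destruct (Rle_lt_dec (phi (x/2)) (8/5)) as [H|H]. lra. exfalso.
  destruct (lim0 (phi (x/2) - 8/5) ltac:(lra)) as [d [Hd Hd1]].
  set (x2 := Rmin (d/2) (x/4)).
  assert (0 < x2) by (apply Rmin_pos; lra).
  assert (x2 <= d/2) by apply Rmin_l. assert (x2 <= x/4) by apply Rmin_r.
  specialize (Hd1 x2 ltac:(lra)). apply Rabs_lt_between in Hd1.
  assert (phi (x/2) < phi x2) by (apply phi_decr; lra). lra.
Qed.

Lemma ln4_pos : 0 < ln 4.
Proof. rewrite <- ln_1. apply ln_increasing; lra. Qed.

Lemma phi_gt_ln4 x : 0 < x < 1 -> ln 4 < phi x.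
Proof.
  intros Hx. assert (H1 : phi ((1 + x)/2) < phi x) by (apply phi_decr; lra).
  destruct (Rle_lt_dec (ln 4) (phi ((1+x)/2))) as [H|H].
  2:{ exfalso.
    destruct (lim1 (ln 4 - phi ((1+x)/2)) ltac:(lra)) as [d [Hd Hd1]].
    set (x2 := Rmax (1 - d/2) ((3 + x)/4)).
    assert (1 - d/2 <= x2) by apply Rmax_l. assert ((3+x)/4 <= x2) by apply Rmax_r.
    assert (x2 < 1) by (unfold x2; apply Rmax_lub_lt; lra).
    specialize (Hd1 x2 ltac:(lra)). apply Rabs_lt_between in Hd1.
    assert (phi x2 < phi ((1+x)/2)) by (apply phi_decr; lra). lra. }
  destruct H as [H|H]. lra. exfalso.
  (* phi ((1+x)/2) = ln 4: then points further right are below ln 4 *)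
  set (x1 := (3 + x) / 4).
  assert (phi x1 < phi ((1 + x)/2)) by (apply phi_decr; unfold x1; lra).
  destruct (lim1 (ln 4 - phi x1) ltac:(lra)) as [d [Hd Hd1]].
  set (x2 := Rmax (1 - d/2) ((7 + x)/8)).
  assert (1 - d/2 <= x2) by apply Rmax_l. assert ((7+x)/8 <= x2) by apply Rmax_r.
  assert (x2 < 1) by (unfold x2; apply Rmax_lub_lt; lra).
  specialize (Hd1 x2 ltac:(lra)). apply Rabs_lt_between in Hd1.
  assert (phi x2 < phi x1) by (apply phi_decr; unfold x1 in *; lra). lra.
Qed.

Lemma phi_surj z : ln 4 < z < 8/5 -> exists x, 0 < x < 1 /\ phi x = z.
Proof.
  intros Hz.
  destruct (lim0 (8/5 - z) ltac:(lra)) as [d0 [Hd0 H0]].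
  destruct (lim1 (z - ln 4) ltac:(lra)) as [d1 [Hd1 H1]].
  set (xa := Rmin (d0/2) (1/2)).
  assert (0 < xa) by (apply Rmin_pos; lra).
  assert (xa <= d0/2) by apply Rmin_l. assert (xa <= 1/2) by apply Rmin_r.
  set (xb := Rmax (1 - d1/2) (1/2)).
  assert (1 - d1/2 <= xb) by apply Rmax_l. assert (1/2 <= xb) by apply Rmax_r.
  assert (xb < 1) by (unfold xb; apply Rmax_lub_lt; lra).
  specialize (H0 xa ltac:(lra)). apply Rabs_lt_between in H0.
  specialize (H1 xb ltac:(lra)). apply Rabs_lt_between in H1.
  assert (Hab : xa < xb).
  { destruct (Rlt_or_le xa xb) as [h|h]; auto. exfalso.
    destruct (Rle_lt_or_eq_dec xb xa h) as [h'|h'].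
    assert (phi xa < phi xb) by (apply phi_decr; lra). lra. rewrite h' in H1. lra. }
  destruct (Ranalysis5.IVT_interv (fun t => z - phi t) xa xb) as [c [Hc Hfc]].
  - intros t Ht. apply continuity_pt_minus. apply continuity_pt_const. intros u v; reflexivity.
    apply phi_cont. lra.
  - exact Hab.
  - lra.
  - lra.
  - exists c. split. lra. lra.
Qed.

Theorem mainTheorem10 :
  (forall x y : R, 0 < x -> x < y -> y < 1 -> phi y < phi x) /\
  (forall z : R, (exists x : R, 0 < x < 1 /\ phi x = z) <-> ln 4 < z < 8 / 5) /\
  (forall x : R, 0 < x < 1 ->
     2 * x * Kx x * (Kx x - Ex x) / (8 / 5 - / 2 * ln (1 - x))
       <= 2 * Ex x * Kx x - 2 * Ex x ^ 2 - x * (1 - x) * Kx x ^ 2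
     /\ 2 * Ex x * Kx x - 2 * Ex x ^ 2 - x * (1 - x) * Kx x ^ 2
       <= 2 * x * Kx x * (Kx x - Ex x) / (ln 4 - / 2 * ln (1 - x))).
Proof.
  split; [|split].
  - exact phi_decr.
  - intros z. split.
    + intros [x [Hx Hz]]. subst z. split. apply phi_gt_ln4; auto. apply phi_lt_85; auto.
    + apply phi_surj.
  - intros x Hx.
    pose proof (phi_gt_ln4 x Hx) as H1. pose proof (phi_lt_85 x Hx) as H2.
    pose proof (Dn_neg x Hx) as HD.
    pose proof ln4_pos as H4.
    assert (Hl : ln (1 - x) < 0). { rewrite <- ln_1. apply ln_increasing; lra. }
    unfold phi in H1, H2. rewrite Kx_eq, Ex_eq in * by lra. unfold Dn in HD.
    set (K := KK x) in *. set (E := EE x) in *.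
    set (A := 2 * E * K - 2 * E ^ 2 - x * (1 - x) * K ^ 2).
    set (N := 2 * x * K * (K - E)).
    assert (HA : 0 < A) by (unfold A; lra).
    assert (Hr : 2 * x * K * (E - K) / (2 * E ^ 2 - 2 * E * K + x * (1 - x) * K ^ 2) = N / A)
      by (unfold N, A; field; split; lra).
    rewrite Hr in H1, H2.
    set (l := / 2 * ln (1 - x)) in *.
    assert (Hl2 : l < 0) by (unfold l; lra).
    assert (HNA1 : N < (8/5 - l) * A).
    { assert (N / A * A = N) by (field; lra). nra. }
    assert (HNA2 : (ln 4 - l) * A < N).
    { assert (N / A * A = N) by (field; lra). nra. }
    split.
    + apply Rmult_le_reg_r with (8/5 - l). lra.
      unfold Rdiv. rewrite Rmult_assoc, Rinv_l by lra. lra.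
    + apply Rmult_le_reg_r with (ln 4 - l). lra.
      unfold Rdiv. rewrite Rmult_assoc, Rinv_l by lra. lra.
Qed.
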